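(* Let $x^\ast\in\mathcal C$ be a local minimizer of the MPVC, and assume $f$ is locally Lipschitz continuous around $x^\ast$. If MPVC-generalized quasinormality holds at $x^\ast$, then the MPVC-tailored penalty function $P_\alpha$ is exact at $x^\ast$: there exists $\bar\alpha\ge 0$ such that $x^\ast$ is a local minimizer of $P_\alpha$ over $\mathbb R^n$ for every $\alpha\ge\bar\alpha$. (One may take $\bar\alpha=cL$, where $L$ is a local Lipschitz constant of $f$ near $x^\ast$ and $c>0$ is a constant depending only on the constraints and $x^\ast$.)
   Context: MPVC setup. Let $f,g_1,\dots,g_m,h_1,\dots,h_l,G_1,\dots,G_q,H_1,\dots,H_q:\mathbb R^n\to\mathbb R$ be continuously differentiable. The MPVC is: minimize $f(x)$ subject to $g_i(x)\le 0$ $(i=1,\dots,m)$, $h_j(x)=0$ $(j=1,\dots,l)$, $H_i(x)\ge 0$ and $G_i(x)H_i(x)\le 0$ $(i=1,\dots,q)$. Its feasible set is denoted $\mathcal C$. For $x^\ast\in\mathcal C$ define the index sets $I_g=\{i: g_i(x^\ast)=0\}$, $I_+=\{i:H_i(x^\ast)>0\}$, $I_0=\{i:H_i(x^\ast)=0\}$, $I_{+0}=\{i:H_i(x^\ast)>0,\ G_i(x^\ast)=0\}$, $I_{+-}=\{i:H_i(x^\ast)>0,\ G_i(x^\ast)<0\}$, $I_{0+}=\{i:H_i(x^\ast)=0,\ G_i(x^\ast)>0\}$, $I_{0-}=\{i:H_i(x^\ast)=0,\ G_i(x^\ast)<0\}$, $I_{00}=\{i:H_i(x^\ast)=0,\ G_i(x^\ast)=0\}$.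 Admissible multipliers. A vector $(\lambda,\mu,\eta^G,\eta^H)\in\mathbb R^m\times\mathbb R^l\times\mathbb R^q\times\mathbb R^q$ is called an admissible multiplier at $x^\ast$ if (i) $\sum_{i=1}^m\lambda_i\nabla g_i(x^\ast)+\sum_{j=1}^l\mu_j\nabla h_j(x^\ast)+\sum_{i=1}^q\eta^G_i\nabla G_i(x^\ast)-\sum_{i=1}^q\eta^H_i\nabla H_i(x^\ast)=0$; (ii) $\lambda_i\ge0$ for $i\in I_g$, $\lambda_i=0$ for $i\notin I_g$; $\eta^G_i=0$ for $i\in I_{+-}\cup I_{0-}\cup I_{0+}$, $\eta^G_i\ge0$ for $i\in I_{+0}\cup I_{00}$; $\eta^H_i=0$ for $i\in I_+$, $\eta^H_i\ge 0$ for $i\in I_{0-}$, $\eta^H_i$ free for $i\in I_{0+}$; and $\eta^H_i\eta^G_i=0$ for $i\in I_{00}$. MPVC-generalized quasinormality holds at $x^\ast\in\mathcal C$ if there is no nonzero admissible multiplier $(\lambda,\mu,\eta^G,\eta^H)$ at $x^\ast$ for which there exists a sequence $x^k\to x^\ast$ such that for all $k$: $\lambda_i>0\Rightarrow \lambda_i g_i(x^k)>0$; $\mu_j\ne0\Rightarrow\mu_j h_j(x^k)>0$; $\eta^H_i\neq0\Rightarrow \eta^H_iH_i(x^k)<0$; $\eta^G_i>0\Rightarrow\eta^G_iG_i(x^k)>0$. MPVC-tailored penalty function: for $\alpha\ge0$, $P_\alpha(x)=f(x)+\alpha\Big[\sum_{i=1}^m\max\{0,g_i(x)\}+\sum_{j=1}^l|h_j(x)|+\sum_{i=1}^q\max\{0,-H_i(x),\min\{G_i(x),H_i(x)\}\}\Big]$.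 (This equals $f(x)+\alpha\,\mathrm{dist}_\Delta(F(x))$ in the $\ell_1$-norm, where $F(x)=(g(x),h(x),(G_i(x),H_i(x))_{i=1}^q)$ and $\Delta=(-\infty,0]^m\times\{0\}^l\times\Omega^q$ with $\Omega=\{(a,b)\in\mathbb R^2: b\ge0,\ ab\le0\}$.) *)

(* Defs.v *)
From mathcomp Require Import ssreflect ssrfun ssrbool eqtype ssrnat seq choice fintype bigop.
From Stdlib Require Import Reals.
Open Scope R_scope.

Definition vec (n : nat) := 'I_n -> R.

Definition rsum {k : nat} (F : 'I_k -> R) : R := \big[Rplus/0%R]_(i < k) F i.

Definition dot {n} (u v : vec n) : R := rsum (fun i => u i * v i).
Definition vnorm {n} (u : vec n) : R := sqrt (dot u u).
Definition vsub {n} (u v : vec n) : vec n := fun i => u i - v i.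
Definition dist {n} (u v : vec n) : R := vnorm (vsub u v).

Definition has_gradient {n} (f : vec n -> R) (x : vec n) (d : vec n) : Prop :=
  forall eps, 0 < eps -> exists delta, 0 < delta /\
    forall y, dist y x < delta ->
      Rabs (f y - f x - dot d (vsub y x)) <= eps * dist y x.

Definition is_C1 {n} (f : vec n -> R) (df : vec n -> vec n) : Prop :=
  (forall x, has_gradient f x (df x)) /\
  (forall x eps, 0 < eps -> exists delta, 0 < delta /\
      forall y, dist y x < delta -> dist (df y) (df x) < eps).

Definition locally_lipschitz {n} (f : vec n -> R) (x0 : vec n) : Prop :=
  exists L delta, 0 <= L /\ 0 < delta /\
    forall y z, dist y x0 < delta -> dist z x0 < delta ->
      Rabs (f y - f z) <= L * dist y z.

Definition seq_converges {n} (xs : nat -> vec n) (x0 : vec n) : Prop :=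
  forall eps, 0 < eps -> exists N, forall k, (N <= k)%nat -> dist (xs k) x0 < eps.

Section MPVC.
Context {n m l q : nat}
  (f : vec n -> R) (g : 'I_m -> vec n -> R) (h : 'I_l -> vec n -> R)
  (G H : 'I_q -> vec n -> R).

Definition feasible (x : vec n) : Prop :=
  (forall i, g i x <= 0) /\ (forall j, h j x = 0) /\
  (forall i, 0 <= H i x /\ G i x * H i x <= 0).

Definition local_min_on (phi : vec n -> R) (S : vec n -> Prop) (xs : vec n) : Prop :=
  exists eps, 0 < eps /\ forall y, S y -> dist y xs < eps -> phi xs <= phi y.

Definition mpvc_local_min (xs : vec n) : Prop :=
  feasible xs /\ local_min_on f feasible xs.

(* admissible multipliers at xs; dg, dh, dG, dH are the gradient maps *)
Definition admissible (dg : 'I_m -> vec n -> vec n) (dh : 'I_l -> vec n -> vec n)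
  (dG dH : 'I_q -> vec n -> vec n) (xs : vec n)
  (lam : 'I_m -> R) (mu : 'I_l -> R) (etaG etaH : 'I_q -> R) : Prop :=
  (forall k : 'I_n,
     rsum (fun i => lam i * dg i xs k) + rsum (fun j => mu j * dh j xs k)
     + rsum (fun i => etaG i * dG i xs k) - rsum (fun i => etaH i * dH i xs k) = 0) /\
  (forall i, g i xs = 0 -> 0 <= lam i) /\
  (forall i, g i xs <> 0 -> lam i = 0) /\
  (forall i, 0 < H i xs -> G i xs < 0 -> etaG i = 0) /\
  (forall i, H i xs = 0 -> G i xs < 0 -> etaG i = 0) /\
  (forall i, H i xs = 0 -> 0 < G i xs -> etaG i = 0) /\
  (forall i, 0 < H i xs -> G i xs = 0 -> 0 <= etaG i) /\
  (forall i, H i xs = 0 -> G i xs = 0 -> 0 <= etaG i) /\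
  (forall i, 0 < H i xs -> etaH i = 0) /\
  (forall i, H i xs = 0 -> G i xs < 0 -> 0 <= etaH i) /\
  (forall i, H i xs = 0 -> G i xs = 0 -> etaH i * etaG i = 0).

Definition nonzero_multiplier (lam : 'I_m -> R) (mu : 'I_l -> R) (etaG etaH : 'I_q -> R) : Prop :=
  (exists i, lam i <> 0) \/ (exists j, mu j <> 0) \/
  (exists i, etaG i <> 0) \/ (exists i, etaH i <> 0).

Definition MPVC_GQN (dg : 'I_m -> vec n -> vec n) (dh : 'I_l -> vec n -> vec n)
  (dG dH : 'I_q -> vec n -> vec n) (xs : vec n) : Prop :=
  ~ exists lam mu etaG etaH (xk : nat -> vec n),
      admissible dg dh dG dH xs lam mu etaG etaH /\
      nonzero_multiplier lam mu etaG etaH /\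
      seq_converges xk xs /\
      forall k,
        (forall i, 0 < lam i -> 0 < lam i * g i (xk k)) /\
        (forall j, mu j <> 0 -> 0 < mu j * h j (xk k)) /\
        (forall i, etaH i <> 0 -> etaH i * H i (xk k) < 0) /\
        (forall i, 0 < etaG i -> 0 < etaG i * G i (xk k)).

Definition penalty (alpha : R) (x : vec n) : R :=
  f x + alpha * (rsum (fun i => Rmax 0 (g i x)) + rsum (fun j => Rabs (h j x))
                 + rsum (fun i => Rmax 0 (Rmax (- H i x) (Rmin (G i x) (H i x))))).

Definition exact_penalty_at (xs : vec n) : Prop :=
  exists abar, 0 <= abar /\
    forall alpha, abar <= alpha -> local_min_on (penalty alpha) (fun _ => True) xs.

End MPVC.

(* Main.v *)
Require Import Defs.
From HB Require Import structures.
From mathcomp Require Import ssreflect ssrfun ssrbool eqtype ssrnat seq choice fintype bigop.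
From Stdlib Require Import Reals Lra Psatz Classical ClassicalEpsilon.
From mathcomp Require Import zify.
Import Defs.
Open Scope R_scope.

HB.instance Definition _ := Monoid.isComLaw.Build R 0 Rplus (fun a b c => esym (Rplus_assoc a b c)) Rplus_comm Rplus_0_l.
HB.instance Definition _ := Monoid.isMulLaw.Build R 0 Rmult Rmult_0_l Rmult_0_r.
HB.instance Definition _ := Monoid.isAddLaw.Build R Rmult Rplus Rmult_plus_distr_r Rmult_plus_distr_l.

Lemma rsum_add {k} (F1 F2 : 'I_k -> R) : rsum (fun i => F1 i + F2 i) = rsum F1 + rsum F2.
Proof. by rewrite /rsum big_split. Qed.
Lemma rsum_scal {k} c (F : 'I_k -> R) : rsum (fun i => c * F i) = c * rsum F.
Proof. by rewrite /rsum big_distrr. Qed.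
Lemma rsum_ext {k} (F1 F2 : 'I_k -> R) : (forall i, F1 i = F2 i) -> rsum F1 = rsum F2.
Proof. move=> E; rewrite /rsum; apply: eq_bigr => i _; apply E. Qed.
Lemma rsum_le {k} (F1 F2 : 'I_k -> R) : (forall i, F1 i <= F2 i) -> rsum F1 <= rsum F2.
Proof. move=> E; rewrite /rsum; apply: (big_ind2 (fun a b => a <= b)) => //; [lra|move=> *; lra]. Qed.
Lemma rsum_nonneg {k} (F : 'I_k -> R) : (forall i, 0 <= F i) -> 0 <= rsum F.
Proof. move=> E; rewrite /rsum; apply: (big_ind (fun a => 0 <= a)) => //; [lra|move=> *; lra]. Qed.
Lemma rsum_zero {k} (F : 'I_k -> R) : (forall i, F i = 0) -> rsum F = 0.
Proof. move=> E; rewrite /rsum big1 //. Qed.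
Lemma rsum_exch {k p} (F : 'I_k -> 'I_p -> R) :
  rsum (fun i => rsum (fun j => F i j)) = rsum (fun j => rsum (fun i => F i j)).
Proof. by rewrite /rsum exchange_big. Qed.
Lemma rsum_opp {k} (F : 'I_k -> R) : rsum (fun i => - F i) = - rsum F.
Proof. rewrite (@rsum_ext k (fun i => - F i) (fun i => -1 * F i)); [rewrite rsum_scal; ring|move=> i; ring]. Qed.
Lemma rsum_sub {k} (F1 F2 : 'I_k -> R) : rsum (fun i => F1 i - F2 i) = rsum F1 - rsum F2.
Proof. unfold Rminus. rewrite rsum_add rsum_opp //. Qed.
Lemma rsum_abs {k} (F : 'I_k -> R) : Rabs (rsum F) <= rsum (fun i => Rabs (F i)).
Proof. rewrite /rsum; apply: (big_ind2 (fun a b => Rabs a <= b)).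
 - rewrite Rabs_R0; lra.
 - move=> a b c d H1 H2; eapply Rle_trans; [apply Rabs_triang|lra].
 - move=> i _; lra. Qed.
Lemma rsum_nonneg_ge {k} (F : 'I_k -> R) i : (forall j, 0 <= F j) -> F i <= rsum F.
Proof. move=> E; rewrite /rsum (bigD1 i) //=.
 have: 0 <= \big[Rplus/0]_(j < k | j != i) F j.
 { apply: (big_ind (fun a => 0 <= a)) => //; [lra|move=> *; lra]. }
 move=> H0. apply: (Rle_trans _ (F i + 0)); [lra|]. exact: (Rplus_le_compat_l (F i) _ _ H0). Qed.
Lemma rsum_sq_le {k} (F : 'I_k -> R) : (forall j, 0 <= F j) -> rsum (fun i => F i * F i) <= rsum F * rsum F.
Proof. move=> E. rewrite /rsum.
 suff: 0 <= \big[Rplus/0]_(i < k) F i /\ \big[Rplus/0]_(i < k) (F i * F i) <= \big[Rplus/0]_(i < k) F i * \big[Rplus/0]_(i < k) F i by case.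
 apply: (big_ind2 (fun a b => 0 <= b /\ a <= b * b)).
 - split; lra.
 - move=> a b c d [H1 H2] [H3 H4]; split; nra.
 - move=> i _; split; [apply E| nra]. Qed.

Definition vadd {n} (u v : vec n) : vec n := fun i => u i + v i.
Definition vscal {n} (c : R) (u : vec n) : vec n := fun i => c * u i.

Lemma dot_comm {n} (u v : vec n) : dot u v = dot v u.
Proof. apply rsum_ext => i; ring. Qed.
Lemma dot_ext {n} (u u' v v' : vec n) : (forall i, u i = u' i) -> (forall i, v i = v' i) -> dot u v = dot u' v'.
Proof. move=> E1 E2; apply rsum_ext => i; by rewrite E1 E2. Qed.
Lemma dot_add_l {n} (u u' v : vec n) : dot (vadd u u') v = dot u v + dot u' v.
Proof. rewrite /dot -rsum_add; apply rsum_ext => i; rewrite /vadd; ring. Qed.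
Lemma dot_sub_l {n} (u u' v : vec n) : dot (vsub u u') v = dot u v - dot u' v.
Proof. rewrite /dot -rsum_sub; apply rsum_ext => i; rewrite /vsub; ring. Qed.
Lemma dot_scal_l n c (u v : vec n) : dot (vscal c u) v = c * dot u v.
Proof. rewrite /dot -rsum_scal; apply rsum_ext => i; rewrite /vscal; ring. Qed.
Lemma dot_pos {n} (u : vec n) : 0 <= dot u u.
Proof. apply rsum_nonneg => i; nra. Qed.
Lemma vnorm_nonneg {n} (u : vec n) : 0 <= vnorm u.
Proof. apply sqrt_pos. Qed.
Lemma vnorm_sq {n} (u : vec n) : vnorm u * vnorm u = dot u u.
Proof. apply sqrt_sqrt, dot_pos. Qed.
Lemma vnorm_ext {n} (u v : vec n) : (forall i, u i = v i) -> vnorm u = vnorm v.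
Proof. move=> E; rewrite /vnorm (dot_ext _ _ _ _ E E) //. Qed.

Lemma CS_sq {n} (u v : vec n) : dot u v * dot u v <= dot u u * dot v v.
Proof.
  have key : forall t, 0 <= dot u u + 2 * t * dot u v + t * t * dot v v.
  { move=> t. have := dot_pos (vadd u (vscal t v)).
    rewrite dot_add_l !dot_scal_l (dot_comm u (vadd _ _)) (dot_comm v (vadd _ _)) !dot_add_l !dot_scal_l (dot_comm v u). nra. }
  have Hc := dot_pos v. have Ha := dot_pos u.
  destruct (Rle_lt_or_eq_dec _ _ Hc) as [Hc'|Hc'].
  - have := key (- dot u v / dot v v).
    set a := dot u u; set b := dot u v; set c := dot v v; move=> H.
    have E : a + 2 * (- b / c) * b + - b / c * (- b / c) * c = a - b * b / c by field; apply Rgt_not_eq; exact Hc'.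
    rewrite E in H.
    have : b * b / c <= a by lra.
    move=> H2. apply (Rmult_le_reg_r (/ c)); [apply Rinv_0_lt_compat; exact Hc'|].
    have E2 : a * c * / c = a by field; apply Rgt_not_eq; exact Hc'.
    rewrite E2. lra.
  - rewrite -Hc'. destruct (Req_dec (dot u v) 0) as [Hb|Hb]; [rewrite Hb; lra|].
    have := key (- (dot u u + 1) / (2 * dot u v)). rewrite -Hc'.
    have E : dot u u + 2 * (- (dot u u + 1) / (2 * dot u v)) * dot u v +
      - (dot u u + 1) / (2 * dot u v) * (- (dot u u + 1) / (2 * dot u v)) * 0 = -1 by field; exact Hb.
    rewrite E. lra.
Qed.

Lemma CS {n} (u v : vec n) : Rabs (dot u v) <= vnorm u * vnorm v.
Proof.
  rewrite /vnorm -sqrt_mult; try apply dot_pos.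
  rewrite -sqrt_Rsqr_abs. apply sqrt_le_1_alt. rewrite /Rsqr. apply CS_sq.
Qed.

Lemma vnorm_triang {n} (u v : vec n) : vnorm (vadd u v) <= vnorm u + vnorm v.
Proof.
  have H1 := vnorm_nonneg u. have H2 := vnorm_nonneg v. have H3 := vnorm_nonneg (vadd u v).
  apply Rsqr_incr_0_var; rewrite /Rsqr; [|lra].
  rewrite vnorm_sq.
  have E : (vnorm u + vnorm v) * (vnorm u + vnorm v) = vnorm u * vnorm u + vnorm v * vnorm v + 2 * (vnorm u * vnorm v) by ring.
  rewrite E !vnorm_sq dot_add_l (dot_comm u) (dot_comm v) !dot_add_l (dot_comm v u).
  have := CS u v. move: (dot u v) => b. move=> Hb. have := Rle_abs b. lra.
Qed.

Lemma vnorm_scal {n} c (u : vec n) : vnorm (vscal c u) = Rabs c * vnorm u.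
Proof.
  have E : dot (vscal c u) (vscal c u) = (c * c) * dot u u.
  { rewrite /dot -rsum_scal; apply rsum_ext => i; rewrite /vscal; ring. }
  rewrite /vnorm E sqrt_mult_alt; [|nra]. f_equal. rewrite -sqrt_Rsqr_abs //.
Qed.

Lemma coord_le {n} (u : vec n) i : Rabs (u i) <= vnorm u.
Proof.
  rewrite -sqrt_Rsqr_abs. apply sqrt_le_1_alt. rewrite /Rsqr /dot.
  apply (rsum_nonneg_ge (fun j => u j * u j)) => j; nra.
Qed.

Lemma vnorm_le_l1 {n} (u : vec n) : vnorm u <= rsum (fun i => Rabs (u i)).
Proof.
  have H0 : 0 <= rsum (fun i => Rabs (u i)) by apply rsum_nonneg => i; apply Rabs_pos.
  rewrite /vnorm -(sqrt_Rsqr _ H0). apply sqrt_le_1_alt. rewrite /Rsqr.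
  eapply Rle_trans; [|apply rsum_sq_le; move=> i; apply Rabs_pos].
  apply rsum_le => i. rewrite -Rabs_mult. rewrite Rabs_pos_eq; [lra|nra].
Qed.

Lemma dist_nonneg {n} (x y : vec n) : 0 <= dist x y.
Proof. apply vnorm_nonneg. Qed.
Lemma dist_sym {n} (x y : vec n) : dist x y = dist y x.
Proof. rewrite /dist -(Rmult_1_l (vnorm (vsub y x))) -(Rabs_pos_eq 1); [|lra].
  rewrite -(Rabs_Ropp 1) -vnorm_scal. apply vnorm_ext => i. rewrite /vscal /vsub; ring. Qed.
Lemma dist_triang {n} (x y z : vec n) : dist x z <= dist x y + dist y z.
Proof. rewrite /dist. eapply Rle_trans; [|apply vnorm_triang]. right; apply vnorm_ext => i; rewrite /vadd /vsub; ring. Qed.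
Lemma dist_refl {n} (x : vec n) : dist x x = 0.
Proof. rewrite /dist /vnorm /dot /vsub rsum_zero ?sqrt_0 // => i; ring. Qed.
Lemma dist_coord {n} (x y : vec n) i : Rabs (x i - y i) <= dist x y.
Proof. apply (coord_le (vsub x y)). Qed.

Lemma fin_delta {k} (Q : 'I_k -> R -> Prop) :
  (forall i, exists d, 0 < d /\ forall d', 0 < d' -> d' <= d -> Q i d') ->
  exists d, 0 < d /\ forall i, Q i d.
Proof.
  move=> H.
  pose dd i := proj1_sig (constructive_indefinite_description _ (H i)).
  have Hd i : 0 < dd i /\ forall d', 0 < d' -> d' <= dd i -> Q i d'.
  { rewrite /dd; case: (constructive_indefinite_description _ _) => //. }
  have Hs : 0 <= rsum (fun i => / dd i).
  { apply rsum_nonneg => i; have := proj1 (Hd i); move=> ?; apply Rlt_le, Rinv_0_lt_compat; lra. }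
  exists (/ (1 + rsum (fun i => / dd i))); split.
  - apply Rinv_0_lt_compat; lra.
  - move=> i; apply (proj2 (Hd i)); [apply Rinv_0_lt_compat; lra|].
    have H1 := proj1 (Hd i).
    have H2 : / dd i <= rsum (fun i => / dd i).
    { apply (rsum_nonneg_ge (fun i => / dd i)) => j; have := proj1 (Hd j); move=> ?; apply Rlt_le, Rinv_0_lt_compat; lra. }
    rewrite -(Rinv_inv (dd i)). apply Rinv_le_contravar; [apply Rinv_0_lt_compat; lra|lra].
Qed.

Lemma fin_N {k} (P : 'I_k -> nat -> Prop) :
  (forall i, exists N, forall j, (N <= j)%nat -> P i j) ->
  exists N, forall i j, (N <= j)%nat -> P i j.
Proof.
  move=> H.
  pose NN i := proj1_sig (constructive_indefinite_description _ (H i)).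
  have HN i : forall j, (NN i <= j)%nat -> P i j.
  { rewrite /NN; case: (constructive_indefinite_description _ _) => //. }
  exists (\max_(i : 'I_k) NN i) => i j Hj. apply HN.
  apply: leq_trans Hj. apply: (@leq_bigmax _ NN).
Qed.

Definition cont {n} (F : vec n -> R) (x : vec n) : Prop :=
  forall eps, 0 < eps -> exists d, 0 < d /\ forall y, dist y x < d -> Rabs (F y - F x) < eps.

Definition rcont (phi : R -> R) (a : R) : Prop :=
  forall eps, 0 < eps -> exists d, 0 < d /\ forall b, Rabs (b - a) < d -> Rabs (phi b - phi a) < eps.
Definition rcont2 (phi : R -> R -> R) (a1 a2 : R) : Prop :=
  forall eps, 0 < eps -> exists d, 0 < d /\ forall b1 b2, Rabs (b1 - a1) < d -> Rabs (b2 - a2) < d ->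
    Rabs (phi b1 b2 - phi a1 a2) < eps.

Lemma cont_comp {n} (F : vec n -> R) phi x : cont F x -> rcont phi (F x) -> cont (fun y => phi (F y)) x.
Proof.
  move=> HF Hp eps He. case: (Hp eps He) => d [Hd Hd'].
  case: (HF d Hd) => d2 [Hd2 Hd2']. exists d2; split => // y Hy. by apply Hd', Hd2'.
Qed.

Lemma cont_comp2 {n} (F1 F2 : vec n -> R) phi x : cont F1 x -> cont F2 x -> rcont2 phi (F1 x) (F2 x) ->
  cont (fun y => phi (F1 y) (F2 y)) x.
Proof.
  move=> H1 H2 Hp eps He. case: (Hp eps He) => d [Hd Hd'].
  case: (H1 d Hd) => d1 [Hd1 Hd1']. case: (H2 d Hd) => d2 [Hd2 Hd2'].
  exists (Rmin d1 d2); split; [apply Rmin_glb_lt; lra|] => y Hy.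
  apply Hd'; [apply Hd1'|apply Hd2']; eapply Rlt_le_trans; eauto; [apply Rmin_l|apply Rmin_r].
Qed.

Lemma rcont2_plus a1 a2 : rcont2 Rplus a1 a2.
Proof. move=> e He; exists (e/2); split; [lra|] => b1 b2 H1 H2.
  unfold Rabs in *; repeat destruct Rcase_abs; lra. Qed.
Lemma rcont2_mult a1 a2 : rcont2 Rmult a1 a2.
Proof. move=> e He.
  have Hpos : 0 < Rabs a1 + Rabs a2 + 1 by have := Rabs_pos a1; have := Rabs_pos a2; lra.
  set d := e / (Rabs a1 + Rabs a2 + 1).
  have Hd : 0 < d by apply Rdiv_lt_0_compat; lra.
  have Hdd : d * (Rabs a1 + Rabs a2 + 1) = e by rewrite /d; field; lra.
  clearbody d.
  exists (Rmin 1 d); split; [apply Rmin_glb_lt; lra|].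
  move=> b1 b2 H1 H2.
  have Hm1 := Rmin_l 1 d. have Hm2 := Rmin_r 1 d.
  have E : b1 * b2 - a1 * a2 = (b1 - a1) * (b2 - a2) + a1 * (b2 - a2) + a2 * (b1 - a1) by ring.
  rewrite E.
  have T : Rabs ((b1 - a1) * (b2 - a2) + a1 * (b2 - a2) + a2 * (b1 - a1)) <=
     Rabs (b1 - a1) * Rabs (b2 - a2) + Rabs a1 * Rabs (b2 - a2) + Rabs a2 * Rabs (b1 - a1).
  { rewrite -!Rabs_mult. eapply Rle_trans; [apply Rabs_triang|].
    have := Rabs_triang ((b1 - a1) * (b2 - a2)) (a1 * (b2 - a2)). lra. }
  have P1 := Rabs_pos (b1 - a1). have P2 := Rabs_pos (b2 - a2).
  have A1 := Rabs_pos a1. have A2 := Rabs_pos a2.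
  have Q1 : Rabs (b1 - a1) < d by lra. have Q2 : Rabs (b2 - a2) < d by lra.
  have Q3 : Rabs (b1 - a1) < 1 by lra.
  apply: Rle_lt_trans T _.
  have : Rabs (b1 - a1) * Rabs (b2 - a2) + Rabs a1 * Rabs (b2 - a2) + Rabs a2 * Rabs (b1 - a1)
     < d * (Rabs a1 + Rabs a2 + 1) by nra.
  lra.
Qed.
Lemma rcont2_max a1 a2 : rcont2 Rmax a1 a2.
Proof. move=> e He; exists e; split => // b1 b2.
  intros H1 H2; unfold Rmax; destruct (Rle_dec b1 b2), (Rle_dec a1 a2); unfold Rabs in *; repeat destruct Rcase_abs; lra. Qed.
Lemma rcont2_min a1 a2 : rcont2 Rmin a1 a2.
Proof. move=> e He; exists e; split => // b1 b2.
  intros H1 H2; unfold Rmin; destruct (Rle_dec b1 b2), (Rle_dec a1 a2); unfold Rabs in *; repeat destruct Rcase_abs; lra. Qed.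
Lemma rcont_abs a : rcont Rabs a.
Proof. move=> e He; exists e; split => // b Hb. eapply Rle_lt_trans; [apply Rabs_triang_inv2|].
  done. Qed.
Lemma rcont_sqrt a : 0 <= a -> rcont sqrt a.
Proof.
  move=> Ha e He. exists (e * e); split; [nra|] => b Hb.
  case: (Rle_lt_dec 0 b) => Hb0.
  - have Sa := sqrt_pos a. have Sb := sqrt_pos b.
    have Ea := sqrt_sqrt a Ha. have Eb := sqrt_sqrt b Hb0.
    have : (sqrt b - sqrt a) * (sqrt b - sqrt a) <= Rabs (b - a).
    { move: (sqrt a) (sqrt b) Sa Sb Ea Eb => sa sb Sa Sb Ea Eb. rewrite -Ea -Eb.
      have E : sb * sb - sa * sa = (sb - sa) * (sb + sa) by ring. rewrite E Rabs_mult (Rabs_pos_eq (sb + sa)); [|lra].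
      case: (Rle_lt_dec sa sb) => Hs; [rewrite Rabs_pos_eq; nra|]. rewrite Rabs_left; nra. }
    move=> Hq. move: (sqrt b - sqrt a) Hq => x Hq.
    have Hx : Rabs x * Rabs x = x * x by rewrite -Rabs_mult Rabs_pos_eq; nra.
    have := Rabs_pos x. nra.
  - rewrite (sqrt_neg_0 b); [|lra]. rewrite Rminus_0_l Rabs_Ropp Rabs_pos_eq; [|apply sqrt_pos].
    have : a < e * e by move: Hb; rewrite /Rabs; case: Rcase_abs; lra.
    move=> H. rewrite -(sqrt_Rsqr e); [|lra]. apply sqrt_lt_1_alt. rewrite /Rsqr; lra.
Qed.
Lemma rcont_opp a : rcont Ropp a.
Proof. move=> e He; exists e; split => // b Hb.
  have E : - b - - a = - (b - a) by ring. rewrite E Rabs_Ropp //. Qed.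

Lemma cont_const {n} (c : R) (x : vec n) : cont (fun _ => c) x.
Proof. move=> e He; exists 1; split; [lra|] => y _. rewrite Rminus_diag Rabs_R0 //. Qed.

Lemma cont_plus {n} (F1 F2 : vec n -> R) x : cont F1 x -> cont F2 x -> cont (fun y => F1 y + F2 y) x.
Proof. move=> H1 H2; apply: (@cont_comp2 _ F1 F2 Rplus x H1 H2); apply rcont2_plus. Qed.
Lemma cont_mult {n} (F1 F2 : vec n -> R) x : cont F1 x -> cont F2 x -> cont (fun y => F1 y * F2 y) x.
Proof. move=> H1 H2; apply: (@cont_comp2 _ F1 F2 Rmult x H1 H2); apply rcont2_mult. Qed.
Lemma cont_max {n} (F1 F2 : vec n -> R) x : cont F1 x -> cont F2 x -> cont (fun y => Rmax (F1 y) (F2 y)) x.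
Proof. move=> H1 H2; apply: (@cont_comp2 _ F1 F2 Rmax x H1 H2); apply rcont2_max. Qed.
Lemma cont_min {n} (F1 F2 : vec n -> R) x : cont F1 x -> cont F2 x -> cont (fun y => Rmin (F1 y) (F2 y)) x.
Proof. move=> H1 H2; apply: (@cont_comp2 _ F1 F2 Rmin x H1 H2); apply rcont2_min. Qed.
Lemma cont_opp {n} (F : vec n -> R) x : cont F x -> cont (fun y => - F y) x.
Proof. move=> H; apply: (@cont_comp _ F Ropp x H); apply rcont_opp. Qed.
Lemma cont_abs {n} (F : vec n -> R) x : cont F x -> cont (fun y => Rabs (F y)) x.
Proof. move=> H; apply: (@cont_comp _ F Rabs x H); apply rcont_abs. Qed.
Lemma cont_sqrt {n} (F : vec n -> R) x : cont F x -> 0 <= F x -> cont (fun y => sqrt (F y)) x.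
Proof. move=> H H0; apply: (@cont_comp _ F sqrt x H); apply rcont_sqrt, H0. Qed.

Lemma rsum_const {k} c : rsum (fun _ : 'I_k => c) = INR k * c.
Proof. rewrite /rsum big_const_ord. elim: k => [|k IH] /=; [ring|].
  rewrite IH. case: k {IH} => [|k] /=; ring. Qed.

Lemma cont_rsum {n k} (F : 'I_k -> vec n -> R) x : (forall i, cont (F i) x) ->
  cont (fun y => rsum (fun i => F i y)) x.
Proof.
  move=> H e He.
  have Hk : 0 < INR k + 1 by have := pos_INR k; lra.
  have := @fin_delta k (fun i d => forall y, dist y x < d -> Rabs (F i y - F i x) < e / (INR k + 1)).
  case.
  - move=> i. case: (H i (e / (INR k + 1))); [apply Rdiv_lt_0_compat; lra|].
    move=> d [Hd Hd']; exists d; split => // d' _ Hd'' y Hy; apply Hd'; lra.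
  - move=> d [Hd Hd']. exists d; split => // y Hy.
    rewrite -rsum_sub. eapply Rle_lt_trans; [apply rsum_abs|].
    eapply Rle_lt_trans; [apply (rsum_le _ (fun _ => e / (INR k + 1))) => i; apply Rlt_le, Hd', Hy|].
    rewrite rsum_const. apply (Rmult_lt_reg_r (INR k + 1)) => //.
    have E : INR k * (e / (INR k + 1)) * (INR k + 1) = INR k * e by field; lra.
    rewrite E. nra.
Qed.

Lemma cont_dist {n} (y x : vec n) : cont (fun z => dist z y) x.
Proof. move=> e He; exists e; split => // z Hz.
  have H1 := dist_triang z x y. have H2 := dist_triang x z y. rewrite (dist_sym x z) in H2.
  rewrite /Rabs; case: Rcase_abs; lra. Qed.

Lemma grad_bound {n} (F : vec n -> R) x d : has_gradient F x d ->
  exists del, 0 < del /\ forall y, dist y x < del -> Rabs (F y - F x) <= (vnorm d + 1) * dist y x.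
Proof.
  move=> H. case: (H 1 Rlt_0_1) => del [Hdel Hdel']. exists del; split => // y Hy.
  have := Hdel' y Hy. have := CS d (vsub y x). rewrite -/(dist y x).
  move: (dot d (vsub y x)) => t. move: (F y - F x) => a.
  rewrite /Rabs; repeat case: Rcase_abs; lra.
Qed.

Lemma grad_cont {n} (F : vec n -> R) x d : has_gradient F x d -> cont F x.
Proof.
  move=> H e He. case: (grad_bound _ _ _ H) => del [Hdel Hdel'].
  have Hp : 0 < vnorm d + 1 by have := vnorm_nonneg d; lra.
  exists (Rmin del (e / (vnorm d + 1))); split; [apply Rmin_glb_lt; [lra|apply Rdiv_lt_0_compat; lra]|].
  move=> y Hy. have H1 := Rmin_l del (e / (vnorm d + 1)). have H2 := Rmin_r del (e / (vnorm d + 1)).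
  eapply Rle_lt_trans; [apply Hdel'; lra|].
  have : dist y x < e / (vnorm d + 1) by lra.
  move=> H3. apply (Rmult_lt_reg_r (/ (vnorm d + 1))); [apply Rinv_0_lt_compat; lra|].
  rewrite Rmult_comm -Rmult_assoc Rinv_l; [|lra]. rewrite Rmult_1_l. exact H3.
Qed.

Lemma grad_ext {n} (F1 F2 : vec n -> R) z (d1 d2 : vec n) :
  (forall y, F1 y = F2 y) -> (forall i, d1 i = d2 i) -> has_gradient F1 z d1 -> has_gradient F2 z d2.
Proof.
  move=> EF Ed H e He. case: (H e He) => del [Hd Hd']. exists del; split => // y Hy.
  rewrite -!EF -(dot_ext d1 d2 (vsub y z) (vsub y z)) //. by apply Hd'.
Qed.

Lemma grad_plus {n} (F1 F2 : vec n -> R) z d1 d2 :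
  has_gradient F1 z d1 -> has_gradient F2 z d2 -> has_gradient (fun y => F1 y + F2 y) z (vadd d1 d2).
Proof.
  move=> H1 H2 e He. case: (H1 (e/2)); [lra|] => del1 [Hd1 Hd1']. case: (H2 (e/2)); [lra|] => del2 [Hd2 Hd2'].
  exists (Rmin del1 del2); split; [apply Rmin_glb_lt; lra|] => y Hy.
  have := Hd1' y (Rlt_le_trans _ _ _ Hy (Rmin_l _ _)). have := Hd2' y (Rlt_le_trans _ _ _ Hy (Rmin_r _ _)).
  rewrite dot_add_l. move: (F1 y) (F2 y) (F1 z) (F2 z) (dot d1 (vsub y z)) (dot d2 (vsub y z)) => a b c d p q.
  have := dist_nonneg y z. move=> Hn.
  unfold Rabs; repeat destruct Rcase_abs; lra.
Qed.

Lemma dot_rsum {n k} (D : 'I_k -> vec n) (v : vec n) :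
  dot (fun kk => rsum (fun i => D i kk)) v = rsum (fun i => dot (D i) v).
Proof.
  rewrite /dot. rewrite (@rsum_ext n (fun kk => rsum (fun i => D i kk) * v kk) (fun kk => rsum (fun i => D i kk * v kk))).
  - apply rsum_exch.
  - move=> kk. rewrite Rmult_comm -rsum_scal. apply rsum_ext => i; ring.
Qed.

Lemma grad_rsum {n k} (F : 'I_k -> vec n -> R) z (D : 'I_k -> vec n) :
  (forall i, has_gradient (F i) z (D i)) ->
  has_gradient (fun y => rsum (fun i => F i y)) z (fun kk => rsum (fun i => D i kk)).
Proof.
  move=> H e He.
  have Hk : 0 < INR k + 1 by have := pos_INR k; lra.
  have := @fin_delta k (fun i d => forall y, dist y z < d ->
     Rabs (F i y - F i z - dot (D i) (vsub y z)) <= e / (INR k + 1) * dist y z).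
  case.
  - move=> i. case: (H i (e / (INR k + 1))); [apply Rdiv_lt_0_compat; lra|].
    move=> d [Hd Hd']; exists d; split => // d' _ Hd'' y Hy; apply Hd'; lra.
  - move=> d [Hd Hd']. exists d; split => // y Hy.
    rewrite dot_rsum -!rsum_sub. eapply Rle_trans; [apply rsum_abs|].
    eapply Rle_trans; [apply (rsum_le _ (fun _ => e / (INR k + 1) * dist y z)) => i; apply Hd', Hy|].
    rewrite rsum_const.
    have Hn := dist_nonneg y z.
    have E : INR k * (e / (INR k + 1) * dist y z) = (INR k / (INR k + 1)) * (e * dist y z) by field; lra.
    rewrite E. have : INR k / (INR k + 1) <= 1.
    { apply (Rmult_le_reg_r (INR k + 1)) => //. have E2 : INR k / (INR k + 1) * (INR k + 1) = INR k by field; lra.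
      rewrite E2; lra. }
    move=> Hq. have := Rmult_le_pos e (dist y z) (Rlt_le _ _ He) Hn. nra.
Qed.

Lemma grad_chain {n} (F : vec n -> R) z d (phi : R -> R) c K :
  has_gradient F z d -> 0 <= K ->
  (forall a, Rabs (phi a - phi (F z) - c * (a - F z)) <= K * ((a - F z) * (a - F z))) ->
  has_gradient (fun y => phi (F y)) z (vscal c d).
Proof.
  move=> H HK Hphi e He.
  case: (grad_bound _ _ _ H) => del0 [Hd0 Hd0'].
  set M := vnorm d + 1.
  have HM : 0 < M by rewrite /M; have := vnorm_nonneg d; lra.
  have Hc : 0 < Rabs c + 1 by have := Rabs_pos c; lra.
  case: (H (e / 2 / (Rabs c + 1))); [apply Rdiv_lt_0_compat; lra|] => del1 [Hd1 Hd1'].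
  have HKM : 0 < K * M * M + 1 by have := Rmult_le_pos (K * M) M (Rmult_le_pos _ _ HK (Rlt_le _ _ HM)) (Rlt_le _ _ HM); lra.
  exists (Rmin (Rmin del0 del1) (e / 2 / (K * M * M + 1))); split.
  { apply Rmin_glb_lt; [apply Rmin_glb_lt; lra|]. apply Rdiv_lt_0_compat; lra. }
  move=> y Hy.
  have Hm1 := Rmin_l (Rmin del0 del1) (e / 2 / (K * M * M + 1)).
  have Hm2 := Rmin_r (Rmin del0 del1) (e / 2 / (K * M * M + 1)).
  have Hm3 := Rmin_l del0 del1. have Hm4 := Rmin_r del0 del1.
  have B0 := Hd0' y ltac:(lra). have B1 := Hd1' y ltac:(lra).
  have P := Hphi (F y). rewrite dot_scal_l.
  have Hn := dist_nonneg y z.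
  set t := dist y z in Hy B0 B1 Hn *. fold M in B0.
  set u := F y - F z in B0 P. set w := dot d (vsub y z) in B1 *.
  have E1 : phi (F y) - phi (F z) - c * w = (phi (F y) - phi (F z) - c * u) + c * (u - w) by ring.
  rewrite E1. eapply Rle_trans; [apply Rabs_triang|]. rewrite Rabs_mult.
  have Q1 : Rabs c * Rabs (u - w) <= Rabs c * (e / 2 / (Rabs c + 1) * t).
  { apply Rmult_le_compat_l; [apply Rabs_pos|]. exact B1. }
  have Q2 : Rabs c * (e / 2 / (Rabs c + 1) * t) <= e / 2 * t.
  { have E : Rabs c * (e / 2 / (Rabs c + 1) * t) = (Rabs c / (Rabs c + 1)) * (e / 2 * t) by field; lra.
    rewrite E. have : Rabs c / (Rabs c + 1) <= 1.
    { apply (Rmult_le_reg_r (Rabs c + 1)) => //. have E2 : Rabs c / (Rabs c + 1) * (Rabs c + 1) = Rabs c by field; lra. rewrite E2; lra. }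
    have := Rabs_pos c. move=> ? ?. have : 0 <= e / 2 * t by apply Rmult_le_pos; lra. nra. }
  have Q3 : K * (u * u) <= e / 2 * t.
  { have Huu : u * u <= (M * t) * (M * t).
    { have := Rabs_pos u. rewrite -(Rabs_pos_eq (u * u)); [|nra]. rewrite Rabs_mult. move=> Hu. nra. }
    have Ht : t < e / 2 / (K * M * M + 1) by lra.
    have Ht' : t * (K * M * M + 1) <= e / 2.
    { apply (Rmult_le_reg_r (/ (K * M * M + 1))); [apply Rinv_0_lt_compat; lra|].
      rewrite Rmult_assoc Rinv_r; [|lra]. rewrite Rmult_1_r. lra. }
    have : K * (u * u) <= K * (M * t * (M * t)) by apply Rmult_le_compat_l.
    move=> H3. have : K * (M * t * (M * t)) <= t * (e / 2).
    { have E : K * (M * t * (M * t)) = t * (t * (K * M * M)) by ring. rewrite E.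
      apply Rmult_le_compat_l => //. have : 0 <= K * M * M by apply Rmult_le_pos; [apply Rmult_le_pos|]; lra.
      nra. }
    lra. }
  lra.
Qed.

Set Implicit Arguments.

Definition cv (a : nat -> R) (L : R) : Prop :=
  forall eps, 0 < eps -> exists N, forall j, (N <= j)%nat -> Rabs (a j - L) < eps.

Lemma eps_N eps : 0 < eps -> exists N, forall j, (N <= j)%nat -> / (INR j + 1) < eps.
Proof.
  move=> He. case: (archimed_cor1 eps He) => N [HN HN0]. exists N => j Hj.
  eapply Rle_lt_trans; [|apply HN]. apply Rinv_le_contravar; [apply lt_0_INR; lia|].
  have : INR N <= INR j by apply le_INR; apply/leP. lra.
Qed.

Definition incr (phi : nat -> nat) := forall j, (phi j < phi j.+1)%nat.
Lemma incr_ge phi : incr phi -> forall j, (j <= phi j)%nat.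
Proof. move=> H; elim => [|j IH] //. have := H j. lia. Qed.
Lemma incr_mono phi : incr phi -> forall j j', (j <= j')%nat -> (phi j <= phi j')%nat.
Proof. move=> H j j' Hj. have [d ->] : exists d, j' = (j + d)%nat by exists (j' - j)%nat; lia.
  elim: d {Hj} => [|d IH]; first by rewrite addn0.
  have := H (j + d)%nat. rewrite addnS. lia. Qed.
Lemma incr_comp phi psi : incr phi -> incr psi -> incr (fun j => phi (psi j)).
Proof. move=> H1 H2 j. have := H2 j. move=> Hj. have := @incr_mono phi H1 (psi j).+1 (psi j.+1) Hj. have := H1 (psi j). lia. Qed.

Lemma cv_sub a L phi : cv a L -> incr phi -> cv (fun j => a (phi j)) L.
Proof. move=> H Hp e He. case: (H e He) => N HN. exists N => j Hj. apply HN. have := @incr_ge phi Hp j. lia. Qed.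
Lemma cv_const c : cv (fun _ => c) c.
Proof. move=> e He; exists 0%nat => j _. rewrite Rminus_diag Rabs_R0 //. Qed.
Lemma cv_plus a b La Lb : cv a La -> cv b Lb -> cv (fun j => a j + b j) (La + Lb).
Proof. move=> Ha Hb e He. case: (Ha (e/2)); [lra|] => N1 H1. case: (Hb (e/2)); [lra|] => N2 H2.
  exists (maxn N1 N2) => j Hj. have := H1 j ltac:(lia). have := H2 j ltac:(lia).
  unfold Rabs; repeat destruct Rcase_abs; lra. Qed.
Lemma cv_opp a La : cv a La -> cv (fun j => - a j) (- La).
Proof. move=> Ha e He. case: (Ha e He) => N H; exists N => j Hj. have := H j Hj.
  unfold Rabs; repeat destruct Rcase_abs; lra. Qed.
Lemma cv_mult a b La Lb : cv a La -> cv b Lb -> cv (fun j => a j * b j) (La * Lb).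
Proof. move=> Ha Hb e He. case: (rcont2_mult La Lb e He) => d [Hd Hd'].
  case: (Ha d Hd) => N1 H1. case: (Hb d Hd) => N2 H2.
  exists (maxn N1 N2) => j Hj. apply Hd'; [apply H1|apply H2]; lia. Qed.
Lemma cv_unique a L1 L2 : cv a L1 -> cv a L2 -> L1 = L2.
Proof. move=> H1 H2. apply NNPP => Hn.
  have He : 0 < Rabs (L1 - L2) / 2 by apply Rdiv_lt_0_compat; [apply Rabs_pos_lt; lra|lra].
  case: (H1 _ He) => N1 Q1. case: (H2 _ He) => N2 Q2.
  have := Q1 (maxn N1 N2) ltac:(lia). have := Q2 (maxn N1 N2) ltac:(lia).
  move: (a (maxn N1 N2)) => x. unfold Rabs; repeat destruct Rcase_abs; lra. Qed.
Lemma cv_ext a b L : (forall j, a j = b j) -> cv a L -> cv b L.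
Proof. move=> E H e He. case: (H e He) => N HN; exists N => j Hj; rewrite -E; auto. Qed.
Lemma cv_le0 a L : (exists N, forall j, (N <= j)%nat -> 0 <= a j) -> cv a L -> 0 <= L.
Proof. move=> [N HN] H. apply Rnot_lt_le => HL.
  case: (H (- L)); [lra|] => N1 H1. have := H1 (maxn N N1) ltac:(lia). have := HN (maxn N N1) ltac:(lia).
  move: (a (maxn N N1)) => x. unfold Rabs; repeat destruct Rcase_abs; lra. Qed.
Lemma cv_pos a L : cv a L -> 0 < L -> exists N, forall j, (N <= j)%nat -> 0 < a j.
Proof. move=> H HL. case: (H L HL) => N HN; exists N => j Hj. have := HN j Hj.
  unfold Rabs; repeat destruct Rcase_abs; lra. Qed.
Lemma cv_neg a L : cv a L -> L < 0 -> exists N, forall j, (N <= j)%nat -> a j < 0.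
Proof. move=> H HL. case: (H (- L)); [lra|] => N HN; exists N => j Hj. have := HN j Hj.
  unfold Rabs; repeat destruct Rcase_abs; lra. Qed.
Lemma cv_eq0 a L : (exists N, forall j, (N <= j)%nat -> a j = 0) -> cv a L -> L = 0.
Proof. move=> [N HN] H. apply NNPP => Hn. case: (Rlt_or_le L 0) => Hl.
  - case: (cv_neg H Hl) => N1 H1. have := H1 (maxn N N1) ltac:(lia). rewrite HN; [lra|lia].
  - have Hl' : 0 < L by lra. case: (cv_pos H Hl') => N1 H1. have := H1 (maxn N N1) ltac:(lia). rewrite HN; [lra|lia].
Qed.
Lemma cv_squeeze0 a b : (forall j, Rabs (a j) <= b j) -> cv b 0 -> cv a 0.
Proof. move=> Hb H e He. case: (H e He) => N HN; exists N => j Hj. have := HN j Hj. have := Hb j.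
  rewrite Rminus_0_r. unfold Rabs; repeat destruct Rcase_abs; lra. Qed.
Lemma cv_inv : cv (fun j => / (INR j + 1)) 0.
Proof. move=> e He. case: (eps_N He) => N HN; exists N => j Hj. rewrite Rminus_0_r Rabs_pos_eq.
  - by apply HN. - apply Rlt_le, Rinv_0_lt_compat; have := pos_INR j; lra. Qed.

Lemma cv_rsum {k} (a : 'I_k -> nat -> R) (L : 'I_k -> R) :
  (forall i, cv (a i) (L i)) -> cv (fun j => rsum (fun i => a i j)) (rsum L).
Proof.
  move=> H e He. have Hk : 0 < INR k + 1 by have := pos_INR k; lra.
  case: (@fin_N k (fun i j => Rabs (a i j - L i) < e / (INR k + 1))).
  - move=> i; apply H; apply Rdiv_lt_0_compat; lra.
  - move=> N HN; exists N => j Hj. rewrite -rsum_sub. eapply Rle_lt_trans; [apply rsum_abs|].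
    eapply Rle_lt_trans; [apply (rsum_le _ (fun _ => e / (INR k + 1))) => i; apply Rlt_le, HN, Hj|].
    rewrite rsum_const. apply (Rmult_lt_reg_r (INR k + 1)) => //.
    have E : INR k * (e / (INR k + 1)) * (INR k + 1) = INR k * e by field; lra.
    rewrite E. nra.
Qed.

Lemma cv_cont {n} (F : vec n -> R) (xs : nat -> vec n) x :
  seq_converges xs x -> cont F x -> cv (fun j => F (xs j)) (F x).
Proof. move=> Hx HF e He. case: (HF e He) => d [Hd Hd']. case: (Hx d Hd) => N HN.
  exists N => j Hj. by apply Hd', HN. Qed.

Lemma vcv_coord {n} (xs : nat -> vec n) x : (forall i, cv (fun j => xs j i) (x i)) -> seq_converges xs x.
Proof.
  move=> H e He. have Hk : 0 < INR n + 1 by have := pos_INR n; lra.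
  case: (@fin_N n (fun i j => Rabs (xs j i - x i) < e / (INR n + 1))).
  - move=> i; apply H; apply Rdiv_lt_0_compat; lra.
  - move=> N HN; exists N => j Hj. eapply Rle_lt_trans; [apply vnorm_le_l1|].
    eapply Rle_lt_trans; [apply (rsum_le _ (fun _ => e / (INR n + 1))) => i; apply Rlt_le, HN, Hj|].
    rewrite rsum_const. apply (Rmult_lt_reg_r (INR n + 1)) => //.
    have E : INR n * (e / (INR n + 1)) * (INR n + 1) = INR n * e by field; lra.
    rewrite E. nra.
Qed.

Lemma BW1 (u : nat -> R) B : (forall j, Rabs (u j) <= B) -> exists phi, incr phi /\ exists l, cv (fun j => u (phi j)) l.
Proof.
  move=> Hb.
  have Hx : forall j, (fun c => -B <= c <= B) (u j) by move=> j; have := Hb j; unfold Rabs; destruct Rcase_abs; lra.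
  case: (Bolzano_Weierstrass u _ (compact_P3 (-B) B) Hx) => l Hl.
  have Hpick : forall N j, exists p, (N <= p)%nat /\ Rabs (u p - l) < / (INR j + 1).
  { move=> N j. have Hp : 0 < / (INR j + 1) by apply Rinv_0_lt_compat; have := pos_INR j; lra.
    case: (Hl (disc l (mkposreal _ Hp)) N); [exists (mkposreal _ Hp) => x // |].
    move=> p [Hp1 Hp2]; exists p; split; [by apply/leP|]. exact Hp2. }
  pose pick N j := proj1_sig (constructive_indefinite_description _ (Hpick N j)).
  have Hpk N j : (N <= pick N j)%nat /\ Rabs (u (pick N j) - l) < / (INR j + 1).
  { rewrite /pick; case: (constructive_indefinite_description _ _) => //. }
  pose fix phi j := match j with O => pick 0%nat 0%nat | S j' => pick (S (phi j')) (S j') end.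
  exists phi; split.
  - move=> j /=. exact (proj1 (Hpk _ _)).
  - exists l. have Hsq : cv (fun j => u (phi j) - l) 0.
    { apply: (@cv_squeeze0 _ (fun j => / (INR j + 1))); last by apply cv_inv.
      move=> j. apply Rlt_le. case: j => [|j]; [exact (proj2 (Hpk 0%nat 0%nat))|exact (proj2 (Hpk _ j.+1))]. }
    move=> e He. case: (Hsq e He) => N HN; exists N => j Hj. have := HN j Hj. rewrite Rminus_0_r //.
Qed.

Lemma BWseq {I : eqType} (s : seq I) (u : nat -> I -> R) B : (forall j i, Rabs (u j i) <= B) ->
  exists phi, incr phi /\ forall i, i \in s -> exists L, cv (fun j => u (phi j) i) L.
Proof.
  move=> Hb. elim: s => [|a s [phi1 [Hp1 IH]]].
  - exists (fun j => j); split => // j /=; lia.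
  - case: (@BW1 (fun j => u (phi1 j) a) B) => [j|phi2 [Hp2 [la Hla]]]; first by apply Hb.
    exists (fun j => phi1 (phi2 j)); split; [by apply incr_comp|].
    move=> i; rewrite in_cons => /orP [/eqP ->|Hi]; [by exists la|].
    case: (IH i Hi) => L HL; exists L. by apply (cv_sub (a := fun j => u (phi1 j) i)).
Qed.

Lemma BW {p} (u : nat -> 'I_p -> R) B : (forall j i, Rabs (u j i) <= B) ->
  exists phi, incr phi /\ exists l : 'I_p -> R, forall i, cv (fun j => u (phi j) i) (l i).
Proof.
  move=> Hb. case: (@BWseq _ (enum 'I_p) u B Hb) => phi [Hp H].
  have H' : forall i, exists L, cv (fun j => u (phi j) i) L by move=> i; apply H; rewrite mem_enum.
  exists phi; split => //.
  exists (fun i => proj1_sig (constructive_indefinite_description _ (H' i))) => i.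
  case: (constructive_indefinite_description _ _) => //.
Qed.

Lemma EVT {n} (psi : vec n -> R) (y : vec n) r : 0 <= r -> (forall x, cont psi x) -> (forall x, 0 <= psi x) ->
  exists z, dist z y <= r /\ forall x, dist x y <= r -> psi z <= psi x.
Proof.
  move=> Hr Hc Hpos.
  pose E := fun v => exists x, dist x y <= r /\ v = - psi x.
  have HEb : bound E by exists 0 => v [x [_ ->]]; have := Hpos x; lra.
  have HEn : exists v, E v by exists (- psi y), y; rewrite dist_refl; split => //.
  case: (completeness E HEb HEn) => M [HM1 HM2].
  have Hlow : forall x, dist x y <= r -> - M <= psi x by move=> x Hx; have := HM1 (- psi x) (ex_intro _ x (conj Hx erefl)); lra.
  have Happ : forall j, exists x, dist x y <= r /\ psi x < - M + / (INR j + 1).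
  { move=> j. apply NNPP => Hn.
    have Hp : 0 < / (INR j + 1) by apply Rinv_0_lt_compat; have := pos_INR j; lra.
    have : M <= M - / (INR j + 1); [|lra].
    apply HM2 => v [x [Hx ->]]. apply Rnot_lt_le => Hlt. apply Hn; exists x; split => //; lra. }
  pose xs j := proj1_sig (constructive_indefinite_description _ (Happ j)).
  have Hxs j : dist (xs j) y <= r /\ psi (xs j) < - M + / (INR j + 1).
  { rewrite /xs; case: (constructive_indefinite_description _ _) => //. }
  case: (@BW n (fun j i => xs j i - y i) r) => [j i|phi [Hp [l Hl]]].
  { eapply Rle_trans; [apply dist_coord|apply (proj1 (Hxs j))]. }
  pose z := fun i => l i + y i.
  have Hz : seq_converges (fun j => xs (phi j)) z.
  { apply vcv_coord => i. move=> e He; case: (Hl i e He) => N HN; exists N => j Hj.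
    have := HN j Hj. rewrite /z. have -> : xs (phi j) i - y i - l i = xs (phi j) i - (l i + y i) by ring. done. }
  exists z; split.
  - apply Rnot_lt_le => Hlt. case: (Hz (dist z y - r)); [lra|] => N HN.
    have := HN N (leqnn N). have := dist_triang z (xs (phi N)) y. have := proj1 (Hxs (phi N)).
    rewrite (dist_sym z (xs (phi N))). lra.
  - move=> x Hx. have := Hlow x Hx. suff : psi z <= - M by lra.
    apply Rnot_lt_le => Hlt. set e := (psi z + M) / 2.
    have He : 0 < e by rewrite /e; lra.
    have Hcv := cv_cont Hz (Hc z).
    case: (Hcv e He) => N1 H1. case: (eps_N He) => N2 H2.
    set j := maxn N1 N2.
    have := H1 j ltac:(lia). have := H2 (phi j) ltac:(have := @incr_ge phi Hp j; lia).
    have := proj2 (Hxs (phi j)). rewrite /e. move: (psi (xs (phi j))) => q.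
    unfold Rabs; repeat destruct Rcase_abs; lra.
Qed.

Unset Implicit Arguments.

Definition phi1 (t : R) := Rmax 0 t * Rmax 0 t.
Definition phi3 (t : R) := Rmax 0 (- t) * Rmax 0 (- t).

Lemma phi1_bound a b : Rabs (phi1 a - phi1 b - 2 * Rmax 0 b * (a - b)) <= 1 * ((a - b) * (a - b)).
Proof. have := Rle_0_sqr (a - b); rewrite /Rsqr => Hs. rewrite /phi1 /Rmax. destruct (Rle_dec 0 a), (Rle_dec 0 b); unfold Rabs; destruct Rcase_abs; nra. Qed.
Lemma phi3_bound a b : Rabs (phi3 a - phi3 b - (-2 * Rmax 0 (- b)) * (a - b)) <= 1 * ((a - b) * (a - b)).
Proof. have := Rle_0_sqr (a - b); rewrite /Rsqr => Hs. rewrite /phi3 /Rmax. destruct (Rle_dec 0 (-a)), (Rle_dec 0 (-b)); unfold Rabs; destruct Rcase_abs; nra. Qed.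
Lemma sq_bound a b : Rabs (a * a - b * b - 2 * b * (a - b)) <= 1 * ((a - b) * (a - b)).
Proof. have := Rle_0_sqr (a - b); rewrite /Rsqr => Hs. unfold Rabs; destruct Rcase_abs; nra. Qed.

Section Main.
Context {n m l q : nat} (g : 'I_m -> vec n -> R) (h : 'I_l -> vec n -> R) (G H : 'I_q -> vec n -> R)
  (dg : 'I_m -> vec n -> vec n) (dh : 'I_l -> vec n -> vec n) (dG dH : 'I_q -> vec n -> vec n)
  (Cg : forall i, is_C1 (g i) (dg i)) (Ch : forall j, is_C1 (h j) (dh j))
  (CG : forall i, is_C1 (G i) (dG i)) (CH : forall i, is_C1 (H i) (dH i)).

Definition vGH i x := Rmax 0 (Rmax (- H i x) (Rmin (G i x) (H i x))).
Definition pen x := rsum (fun i => Rmax 0 (g i x)) + rsum (fun j => Rabs (h j x)) + rsum (fun i => vGH i x).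
Definition W x := rsum (fun i => phi1 (g i x)) + rsum (fun j => h j x * h j x) + rsum (fun i => vGH i x * vGH i x).
Definition br (z : vec n) i x := if Rle_dec (G i z) (H i z) then phi1 (G i x) else phi1 (H i x).
Definition Wt z x := rsum (fun i => phi1 (g i x)) + rsum (fun j => h j x * h j x) + rsum (fun i => phi3 (H i x) + br z i x).
Definition brd (z : vec n) i kk := if Rle_dec (G i z) (H i z) then 2 * Rmax 0 (G i z) * dG i z kk else 2 * Rmax 0 (H i z) * dH i z kk.
Definition wt z : vec n := fun kk =>
  rsum (fun i => 2 * Rmax 0 (g i z) * dg i z kk) + rsum (fun j => 2 * h j z * dh j z kk)
  + rsum (fun i => -2 * Rmax 0 (- H i z) * dH i z kk + brd z i kk).

Lemma grad_rsum_chain {k} (F : 'I_k -> vec n -> R) z (D : 'I_k -> vec n) (ph : 'I_k -> R -> R) (c : 'I_k -> R) :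
  (forall i, has_gradient (F i) z (D i)) ->
  (forall i a, Rabs (ph i a - ph i (F i z) - c i * (a - F i z)) <= 1 * ((a - F i z) * (a - F i z))) ->
  has_gradient (fun x => rsum (fun i => ph i (F i x))) z (fun kk => rsum (fun i => c i * D i kk)).
Proof.
  move=> HD Hph. apply grad_rsum => i.
  exact: (grad_chain (F i) z (D i) (ph i) (c i) 1 (HD i) Rle_0_1 (Hph i)).
Qed.

Lemma Wt_grad z : has_gradient (Wt z) z (wt z).
Proof.
  have G1 := grad_rsum_chain g z (fun i => dg i z) (fun _ => phi1) (fun i => 2 * Rmax 0 (g i z))
     (fun i => proj1 (Cg i) z) (fun i a => phi1_bound a _).
  have G2 := grad_rsum_chain h z (fun j => dh j z) (fun _ t => t * t) (fun j => 2 * h j z)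
     (fun j => proj1 (Ch j) z) (fun j a => sq_bound a _).
  have G3 : has_gradient (fun x => rsum (fun i => phi3 (H i x) + br z i x)) z
     (fun kk => rsum (fun i => -2 * Rmax 0 (- H i z) * dH i z kk + brd z i kk)).
  { apply grad_rsum => i. rewrite /br /brd. case: (Rle_dec (G i z) (H i z)) => Hc.
    - apply: (grad_ext _ _ _ (vadd (vscal (-2 * Rmax 0 (- H i z)) (dH i z)) (vscal (2 * Rmax 0 (G i z)) (dG i z))) _ (fun y => erefl)).
      + move=> kk; rewrite /vadd /vscal /=; ring.
      + apply grad_plus; apply grad_chain with (K := 1); try apply Rle_0_1.
        * apply (proj1 (CH i) z).
        * move=> a; apply phi3_bound.
        * apply (proj1 (CG i) z).
        * move=> a; apply phi1_bound.
    - apply: (grad_ext _ _ _ (vadd (vscal (-2 * Rmax 0 (- H i z)) (dH i z)) (vscal (2 * Rmax 0 (H i z)) (dH i z))) _ (fun y => erefl)).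
      + move=> kk; rewrite /vadd /vscal /=; ring.
      + apply grad_plus; apply grad_chain with (K := 1); try apply Rle_0_1.
        * apply (proj1 (CH i) z).
        * move=> a; apply phi3_bound.
        * apply (proj1 (CH i) z).
        * move=> a; apply phi1_bound. }
  have := grad_plus _ _ _ _ _ (grad_plus _ _ _ _ _ G1 G2) G3.
  apply grad_ext => //.
Qed.

Lemma vGH_nonneg i x : 0 <= vGH i x.
Proof. apply Rmax_l. Qed.
Lemma vGH_Wt z i x : vGH i x * vGH i x <= phi3 (H i x) + br z i x.
Proof. rewrite /vGH /phi3 /br /phi1 /Rmax /Rmin. repeat destruct Rle_dec; cbn [is_left]; nra. Qed.
Lemma vGH_Wt_eq z i : vGH i z * vGH i z = phi3 (H i z) + br z i z.
Proof. rewrite /vGH /phi3 /br /phi1 /Rmax /Rmin. repeat destruct Rle_dec; cbn [is_left]; nra. Qed.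
Lemma W_le_Wt z x : W x <= Wt z x.
Proof. rewrite /W /Wt. have := rsum_le _ _ (vGH_Wt z ^~ x). lra. Qed.
Lemma W_eq_Wt z : W z = Wt z z.
Proof. rewrite /W /Wt. rewrite (rsum_ext _ _ (vGH_Wt_eq z)) //. Qed.
Lemma W_nonneg x : 0 <= W x.
Proof. rewrite /W. have := rsum_nonneg (fun i => phi1 (g i x)) ltac:(move=> i; rewrite /phi1; nra).
  have := rsum_nonneg (fun j => h j x * h j x) ltac:(move=> j; nra).
  have := rsum_nonneg (fun i => vGH i x * vGH i x) ltac:(move=> j; nra). lra. Qed.
Lemma pen_nonneg x : 0 <= pen x.
Proof. rewrite /pen. have := rsum_nonneg (fun i => Rmax 0 (g i x)) ltac:(move=> i; apply Rmax_l).
  have := rsum_nonneg (fun j => Rabs (h j x)) ltac:(move=> j; apply Rabs_pos).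
  have := rsum_nonneg (fun i => vGH i x) ltac:(move=> j; apply vGH_nonneg). lra. Qed.
Lemma W_le_pen2 x : W x <= pen x * pen x.
Proof.
  rewrite /W /pen.
  have H1 := rsum_sq_le (fun i => Rmax 0 (g i x)) ltac:(move=> i; apply Rmax_l).
  have H2 := rsum_sq_le (fun j => Rabs (h j x)) ltac:(move=> j; apply Rabs_pos).
  have H3 := rsum_sq_le (fun i => vGH i x) ltac:(move=> j; apply vGH_nonneg).
  have E : rsum (fun j => h j x * h j x) = rsum (fun j => Rabs (h j x) * Rabs (h j x)).
  { apply rsum_ext => j. rewrite -Rabs_mult Rabs_pos_eq //; nra. }
  rewrite E. rewrite /phi1.
  have P1 := rsum_nonneg (fun i => Rmax 0 (g i x)) ltac:(move=> i; apply Rmax_l).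
  have P2 := rsum_nonneg (fun j => Rabs (h j x)) ltac:(move=> j; apply Rabs_pos).
  have P3 := rsum_nonneg (fun i => vGH i x) ltac:(move=> j; apply vGH_nonneg).
  move: H1 H2 H3 P1 P2 P3.
  move: (rsum (fun i => Rmax 0 (g i x))) (rsum (fun j => Rabs (h j x))) (rsum (fun i => vGH i x)) => A B C.
  move: (rsum (fun i => Rmax 0 (g i x) * Rmax 0 (g i x))) (rsum (fun j => Rabs (h j x) * Rabs (h j x))) (rsum (fun i => vGH i x * vGH i x)) => a b c.
  nra.
Qed.
Lemma sqrtW_le_pen x : sqrt (W x) <= pen x.
Proof. rewrite -(sqrt_square (pen x)); [|apply pen_nonneg]. apply sqrt_le_1_alt, W_le_pen2. Qed.

Lemma W_zero_feas x : W x = 0 -> feasible g h G H x.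
Proof.
  move=> HW.
  have T1 : forall i, phi1 (g i x) <= 0.
  { move=> i. have := rsum_nonneg_ge (fun i => phi1 (g i x)) i ltac:(move=> j; rewrite /phi1; nra).
    have := rsum_nonneg (fun j => h j x * h j x) ltac:(move=> j; nra).
    have := rsum_nonneg (fun i => vGH i x * vGH i x) ltac:(move=> j; nra). rewrite /W in HW. lra. }
  have T2 : forall j, h j x * h j x <= 0.
  { move=> j. have := rsum_nonneg_ge (fun j => h j x * h j x) j ltac:(move=> k; nra).
    have := rsum_nonneg (fun i => phi1 (g i x)) ltac:(move=> k; rewrite /phi1; nra).
    have := rsum_nonneg (fun i => vGH i x * vGH i x) ltac:(move=> k; nra). rewrite /W in HW. lra. }
  have T3 : forall i, vGH i x * vGH i x <= 0.
  { move=> i. have := rsum_nonneg_ge (fun i => vGH i x * vGH i x) i ltac:(move=> k; nra).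
    have := rsum_nonneg (fun i => phi1 (g i x)) ltac:(move=> k; rewrite /phi1; nra).
    have := rsum_nonneg (fun j => h j x * h j x) ltac:(move=> k; nra). rewrite /W in HW. lra. }
  split; [|split].
  - move=> i; have := T1 i; rewrite /phi1 /Rmax; destruct Rle_dec; nra.
  - move=> j; have := T2 j; nra.
  - move=> i; have := T3 i; rewrite /vGH /Rmax /Rmin; repeat destruct Rle_dec; split; nra.
Qed.

Lemma pen_feas_zero x : feasible g h G H x -> pen x = 0.
Proof.
  move=> [F1 [F2 F3]]. rewrite /pen !rsum_zero; [lra| | |].
  - move=> i; have := F3 i; rewrite /vGH /Rmax /Rmin; repeat destruct Rle_dec; nra.
  - move=> j; rewrite F2 Rabs_R0 //.
  - move=> i; have := F1 i; rewrite /Rmax; destruct Rle_dec; lra.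
Qed.

Lemma cont_g i x : cont (g i) x. Proof. exact: grad_cont _ _ _ (proj1 (Cg i) x). Qed.
Lemma cont_h j x : cont (h j) x. Proof. exact: grad_cont _ _ _ (proj1 (Ch j) x). Qed.
Lemma cont_G i x : cont (G i) x. Proof. exact: grad_cont _ _ _ (proj1 (CG i) x). Qed.
Lemma cont_H i x : cont (H i) x. Proof. exact: grad_cont _ _ _ (proj1 (CH i) x). Qed.

Lemma cont_vGH i x : cont (vGH i) x.
Proof. apply cont_max; [apply cont_const|]. apply cont_max; [apply cont_opp, cont_H|].
  apply cont_min; [apply cont_G|apply cont_H]. Qed.
Lemma cont_W x : cont W x.
Proof. rewrite /W. apply cont_plus; [apply cont_plus|]; apply cont_rsum => i.
  - apply cont_mult; (apply cont_max; [apply cont_const|apply cont_g]).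
  - apply cont_mult; apply cont_h.
  - apply cont_mult; apply cont_vGH. Qed.
Lemma cont_pen x : cont pen x.
Proof. rewrite /pen. apply cont_plus; [apply cont_plus|]; apply cont_rsum => i.
  - apply cont_max; [apply cont_const|apply cont_g].
  - apply cont_abs, cont_h.
  - apply cont_vGH. Qed.
End Main.

Lemma sqrt_upper a s : 0 <= a -> 0 < s -> sqrt a <= s + (a - s * s) / (2 * s).
Proof.
  move=> Ha Hs. have E := sqrt_sqrt a Ha. have P := sqrt_pos a.
  have := Rle_0_sqr (sqrt a - s); rewrite /Rsqr => Hq. apply (Rmult_le_reg_r (2 * s)); [lra|].
  have E2 : (s + (a - s * s) / (2 * s)) * (2 * s) = s * s + a by field; lra.
  rewrite E2. nra.
Qed.

Lemma fermat {n} (Wf Wtf : vec n -> R) (w z y : vec n) (sig rho : R) :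
  0 < sqrt (Wf z) -> 0 <= sig -> 0 < rho -> (forall x, 0 <= Wf x) -> (forall x, Wf x <= Wtf x) ->
  Wf z = Wtf z -> has_gradient Wtf z w ->
  (forall x, dist x z < rho -> sqrt (Wf z) + sig * dist z y <= sqrt (Wf x) + sig * dist x y) ->
  vnorm w <= 2 * sqrt (Wf z) * sig.
Proof.
  move=> Hs Hsig Hrho Hnn Hle Heq Hgr Hmin.
  set s := sqrt (Wf z) in Hs Hmin *.
  have Hss : s * s = Wtf z by rewrite /s sqrt_sqrt; [apply Heq|apply Hnn].
  apply Rnot_lt_le => Hc.
  set nw := vnorm w in Hc *.
  have Hnw : 0 < nw by have := Rmult_le_pos _ _ (Rmult_le_pos _ _ (Rlt_le _ _ Rlt_0_2) (Rlt_le _ _ Hs)) Hsig; lra.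
  set eps := (nw - 2 * s * sig) / 2.
  have He : 0 < eps by rewrite /eps; lra.
  case: (Hgr eps He) => del [Hdel Hdel'].
  set t := Rmin del rho / (2 * nw).
  have Hmpos : 0 < Rmin del rho by apply Rmin_glb_lt.
  have Ht : 0 < t by apply Rdiv_lt_0_compat; lra.
  set x := vadd z (vscal (- t) w).
  have Hv : forall i, vsub x z i = vscal (- t) w i by move=> i; rewrite /x /vsub /vadd /vscal; ring.
  have Hdxz : dist x z = t * nw.
  { rewrite /dist (vnorm_ext _ _ Hv) vnorm_scal Rabs_Ropp Rabs_pos_eq //; lra. }
  have Htn : t * nw = Rmin del rho / 2 by rewrite /t; field; lra.
  have Hd1 : dist x z < del by have := Rmin_l del rho; lra.
  have Hd2 : dist x z < rho by have := Rmin_r del rho; lra.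
  have G1 := Hdel' x Hd1.
  have Edot : dot w (vsub x z) = - t * (nw * nw).
  { rewrite (dot_ext w w (vsub x z) (vscal (- t) w)) // dot_comm dot_scal_l /nw vnorm_sq //. }
  rewrite Edot Hdxz in G1.
  have Hwt : Wtf x <= s * s - t * (nw * nw) + eps * (t * nw).
  { rewrite Hss. have := Rle_abs (Wtf x - Wtf z - - t * (nw * nw)). lra. }
  have Hsx : sqrt (Wf x) <= s + (Wtf x - s * s) / (2 * s).
  { eapply Rle_trans; [apply sqrt_le_1_alt, Hle|]. apply sqrt_upper => //. have := Hnn x; have := Hle x; lra. }
  have Hm := Hmin x Hd2.
  have Ht3 := dist_triang x z y.
  have Hlow : s - sig * (t * nw) <= sqrt (Wf x) by nra.
  have : s - sig * (t * nw) <= s + (- t * (nw * nw) + eps * (t * nw)) / (2 * s).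
  { eapply Rle_trans; [apply Hlow|]. eapply Rle_trans; [apply Hsx|].
    apply Rplus_le_compat_l. apply Rmult_le_compat_r; [apply Rlt_le, Rinv_0_lt_compat; lra|]. lra. }
  move=> Hfin.
  have Hfin2 : - sig * (t * nw) * (2 * s) <= - t * (nw * nw) + eps * (t * nw).
  { have E : (- t * (nw * nw) + eps * (t * nw)) / (2 * s) * (2 * s) = - t * (nw * nw) + eps * (t * nw) by field; lra.
    rewrite -E. apply Rmult_le_compat_r; lra. }
  have : 0 < t * nw by nra.
  move=> Htnw. rewrite /eps in Hfin2.
  have : t * nw * ((nw - 2 * s * sig) / 2) <= 0 by nra.
  have : 0 < t * nw * ((nw - 2 * s * sig) / 2) by apply Rmult_lt_0_compat; lra.
  lra.
Qed.

Section Step.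
Context {n m l q : nat} (g : 'I_m -> vec n -> R) (h : 'I_l -> vec n -> R) (G H : 'I_q -> vec n -> R)
  (dg : 'I_m -> vec n -> vec n) (dh : 'I_l -> vec n -> vec n) (dG dH : 'I_q -> vec n -> vec n)
  (Cg : forall i, is_C1 (g i) (dg i)) (Ch : forall j, is_C1 (h j) (dh j))
  (CG : forall i, is_C1 (G i) (dG i)) (CH : forall i, is_C1 (H i) (dH i)).

Local Notation Wn := (W g h G H).
Local Notation penn := (pen g h G H).

Lemma step (y : vec n) (c : R) : 0 < c -> (forall z, feasible g h G H z -> c * penn y < dist y z) ->
  exists z, dist z y <= c * penn y / 2 /\ 0 < Wn z /\ vnorm (wt g h G H dg dh dG dH z) <= 2 * sqrt (Wn z) * (2 / c).
Proof.
  move=> Hc Hy.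
  have Hpy := pen_nonneg g h G H y.
  have HWy : 0 < Wn y.
  { case: (Rle_lt_or_eq_dec _ _ (W_nonneg g h G H y)) => // HW.
    have := Hy y (W_zero_feas g h G H y (esym HW)). rewrite dist_refl. nra. }
  have Hsy : 0 < sqrt (Wn y) by apply sqrt_lt_R0.
  have Hsyp := sqrtW_le_pen g h G H y.
  set p := penn y in Hpy Hsyp Hy *.
  have Hp : 0 < p by lra.
  set r := c * p / 2. have Hr : 0 < r by rewrite /r; nra.
  set sig := 2 / c. have Hsig : 0 < sig by rewrite /sig; apply Rdiv_lt_0_compat; lra.
  have Hrs : sig * r = p by rewrite /sig /r; field; lra.
  set psi := fun x => sqrt (Wn x) + sig * dist x y.
  have Hpsic : forall x, cont psi x.
  { move=> x. apply cont_plus; [apply cont_sqrt; [apply (cont_W _ _ _ _ _ _ _ _ Cg Ch CG CH)|apply W_nonneg]|].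
    apply cont_mult; [apply cont_const|apply cont_dist]. }
  have Hpsip : forall x, 0 <= psi x.
  { move=> x. rewrite /psi. have := sqrt_pos (Wn x). have := dist_nonneg x y. nra. }
  case: (@EVT n psi y r (Rlt_le _ _ Hr) Hpsic Hpsip) => z [Hzr Hzmin].
  have Hpz := Hzmin y ltac:(rewrite dist_refl; lra).
  have HWz : 0 < Wn z.
  { case: (Rle_lt_or_eq_dec _ _ (W_nonneg g h G H z)) => // HW.
    have := Hy z (W_zero_feas g h G H z (esym HW)). rewrite dist_sym. rewrite /r in Hzr. nra. }
  have Hsz : 0 < sqrt (Wn z) by apply sqrt_lt_R0.
  have Hzr' : dist z y < r.
  { have Hpz' : sqrt (Wn z) + sig * dist z y <= sqrt (Wn y) + sig * dist y y := Hpz.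
    rewrite dist_refl in Hpz'.
    have : sig * dist z y < p by lra.
    move=> H1. apply (Rmult_lt_reg_l sig) => //. lra. }
  exists z; split; [lra|split => //].
  apply: (fermat Wn (Wt g h G H z) (wt g h G H dg dh dG dH z) z y sig (r - dist z y)).
  - exact Hsz.
  - lra.
  - lra.
  - apply W_nonneg.
  - apply W_le_Wt.
  - apply W_eq_Wt.
  - apply (Wt_grad _ _ _ _ _ _ _ _ Cg Ch CG CH).
  - move=> x Hx. apply Hzmin. have := dist_triang x z y. lra.
Qed.

Definition lamk z i := Rmax 0 (g i z) / sqrt (Wn z).
Definition muk z j := h j z / sqrt (Wn z).
Definition eGk z i := if Rle_dec (G i z) (H i z) then Rmax 0 (G i z) / sqrt (Wn z) else 0.
Definition eHk z i := Rmax 0 (- H i z) / sqrt (Wn z) - (if Rle_dec (G i z) (H i z) then 0 else Rmax 0 (H i z) / sqrt (Wn z)).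

Definition statk z kk := rsum (fun i => lamk z i * dg i z kk) + rsum (fun j => muk z j * dh j z kk)
   + rsum (fun i => eGk z i * dG i z kk) - rsum (fun i => eHk z i * dH i z kk).

Lemma stat_eq z kk : 0 < Wn z -> statk z kk = wt g h G H dg dh dG dH z kk / (2 * sqrt (Wn z)).
Proof.
  move=> HW. have Hs : 0 < sqrt (Wn z) by apply sqrt_lt_R0.
  rewrite /statk /wt. rewrite /Rdiv Rmult_comm !Rmult_plus_distr_l -!rsum_scal.
  transitivity (rsum (fun i => lamk z i * dg i z kk) + rsum (fun j => muk z j * dh j z kk)
     + rsum (fun i => eGk z i * dG i z kk - eHk z i * dH i z kk)); [rewrite rsum_sub; ring|].
  rewrite /lamk /muk /eGk /eHk /brd.
  f_equal; [f_equal|]; apply rsum_ext => i.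
  - field; lra.
  - field; lra.
  - destruct (Rle_dec (G i z) (H i z)); cbn [is_left]; field; lra.
Qed.

Definition nrmk z := rsum (fun i => lamk z i * lamk z i) + rsum (fun j => muk z j * muk z j)
   + rsum (fun i => eGk z i * eGk z i) + rsum (fun i => eHk z i * eHk z i).

Lemma nrm_eq z : 0 < Wn z -> nrmk z = 1.
Proof.
  move=> HW. have Hs : 0 < sqrt (Wn z) by apply sqrt_lt_R0.
  have Hss : sqrt (Wn z) * sqrt (Wn z) = Wn z by apply sqrt_sqrt; lra.
  move: Hs Hss. rewrite /nrmk /lamk /muk /eGk /eHk. move: (sqrt (Wn z)) => s Hs Hss.
  rewrite -(Rinv_l (s * s)); [|nra]. rewrite {2}Hss /W.
  rewrite !Rmult_plus_distr_l -!rsum_scal Rplus_assoc -rsum_add.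
  f_equal; [f_equal|]; apply rsum_ext => i.
  - rewrite /phi1. field; lra.
  - field; lra.
  - rewrite (vGH_Wt_eq G H z i) /br /phi1 /phi3.
    destruct (Rle_dec (G i z) (H i z)) as [Hc|Hc]; cbn [is_left].
    + field; lra.
    + have Hm : Rmax 0 (- H i z) * Rmax 0 (H i z) = 0 by rewrite /Rmax; repeat destruct Rle_dec; nra.
      have E : (Rmax 0 (- H i z) / s - Rmax 0 (H i z) / s) * (Rmax 0 (- H i z) / s - Rmax 0 (H i z) / s)
         = (Rmax 0 (- H i z) * Rmax 0 (- H i z) + Rmax 0 (H i z) * Rmax 0 (H i z) - 2 * (Rmax 0 (- H i z) * Rmax 0 (H i z))) / (s * s) by field; lra.
      rewrite E Hm. field; lra.
Qed.


Ltac prep HW z := rewrite /lamk /muk /eGk /eHk /Rdiv; have Hu : 0 < / sqrt (W g h G H z) by apply Rinv_0_lt_compat, sqrt_lt_R0, HW.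
Lemma lam_nonneg z i : 0 < Wn z -> 0 <= lamk z i.
Proof. move=> HW; prep HW z. move: (/ sqrt _) Hu => u Hu. rewrite /Rmax; destruct Rle_dec; nra. Qed.
Lemma lam_sign z i : 0 < Wn z -> lamk z i <> 0 -> lamk z i * g i z > 0.
Proof. move=> HW; prep HW z. move: (/ sqrt _) Hu => u Hu. rewrite /Rmax; destruct Rle_dec => Hn; [|nra].
  have : g i z <> 0 by move=> E; apply Hn; rewrite E; ring. move=> ?. have : g i z > 0 by lra. nra. Qed.
Lemma lam_zero z i : g i z < 0 -> lamk z i = 0.
Proof. move=> Hg. rewrite /lamk /Rmax; destruct Rle_dec; [lra|rewrite /Rdiv; ring]. Qed.
Lemma mu_sign z j : 0 < Wn z -> muk z j <> 0 -> muk z j * h j z > 0.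
Proof. move=> HW; prep HW z. move: (/ sqrt _) Hu => u Hu => Hn.
  have : h j z <> 0 by move=> E; apply Hn; rewrite E; ring. move=> Hh.
  have : 0 < h j z * h j z by apply Rsqr_pos_lt. nra. Qed.
Lemma eG_nonneg z i : 0 < Wn z -> 0 <= eGk z i.
Proof. move=> HW; prep HW z. move: (/ sqrt _) Hu => u Hu. destruct Rle_dec; cbn [is_left]; [|lra].
  rewrite /Rmax; destruct Rle_dec; nra. Qed.
Lemma eG_sign z i : 0 < Wn z -> eGk z i <> 0 -> eGk z i * G i z > 0.
Proof. move=> HW; prep HW z. move: (/ sqrt _) Hu => u Hu. destruct Rle_dec; cbn [is_left]; [|lra].
  rewrite /Rmax; destruct Rle_dec => Hn; [|nra].
  have : G i z <> 0 by move=> E; apply Hn; rewrite E; ring. move=> ?. have : G i z > 0 by lra. nra. Qed.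
Lemma eG_zero1 z i : G i z < 0 -> eGk z i = 0.
Proof. move=> HG. rewrite /eGk. destruct Rle_dec; cbn [is_left]; [|done]. rewrite /Rmax; destruct Rle_dec; [lra|rewrite /Rdiv; ring]. Qed.
Lemma eG_zero2 z i : H i z < G i z -> eGk z i = 0.
Proof. move=> HG. rewrite /eGk. destruct Rle_dec; cbn [is_left]; [lra|done]. Qed.
Lemma eH_sign z i : 0 < Wn z -> eHk z i <> 0 -> eHk z i * (- H i z) > 0.
Proof. move=> HW; prep HW z. move: (/ sqrt _) Hu => u Hu. destruct Rle_dec; cbn [is_left];
  rewrite /Rmax; repeat destruct Rle_dec; move=> Hn; try nra;
  (have : H i z <> 0 by move=> E; apply Hn; rewrite E; ring); move=> ?; nra. Qed.
Lemma eH_zero z i : G i z <= H i z -> 0 < H i z -> eHk z i = 0.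
Proof. move=> H1 H2. rewrite /eHk. destruct Rle_dec; cbn [is_left]; [|lra].
  rewrite /Rmax; destruct Rle_dec; [lra|rewrite /Rdiv; ring]. Qed.
Lemma eH_nonneg z i : 0 < Wn z -> G i z <= H i z -> 0 <= eHk z i.
Proof. move=> HW; prep HW z. move: (/ sqrt _) Hu => u Hu => H1. destruct Rle_dec; cbn [is_left]; [|lra].
  rewrite /Rmax; destruct Rle_dec; nra. Qed.
Lemma eHG z i : eHk z i * eGk z i = 0.
Proof. rewrite /eHk /eGk. destruct Rle_dec; cbn [is_left]; [|ring].
  rewrite /Rmax /Rdiv; repeat destruct Rle_dec; try (rewrite /Rminus; ring).
  have E1 : G i z = 0 by lra. have E2 : H i z = 0 by lra. rewrite E1 E2; ring. Qed.

Lemma nrm_pos_parts z : 0 <= rsum (fun i => lamk z i * lamk z i) /\ 0 <= rsum (fun i => muk z i * muk z i)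
  /\ 0 <= rsum (fun i => eGk z i * eGk z i) /\ 0 <= rsum (fun i => eHk z i * eHk z i).
Proof. split; [|split; [|split]]; apply rsum_nonneg => i; nra. Qed.
Lemma nrm_lam z i : lamk z i * lamk z i <= nrmk z.
Proof. have := nrm_pos_parts z. have := rsum_nonneg_ge (fun i => lamk z i * lamk z i) i ltac:(move=> k; nra). rewrite /nrmk; lra. Qed.
Lemma nrm_mu z i : muk z i * muk z i <= nrmk z.
Proof. have := nrm_pos_parts z. have := rsum_nonneg_ge (fun i => muk z i * muk z i) i ltac:(move=> k; nra). rewrite /nrmk; lra. Qed.
Lemma nrm_eG z i : eGk z i * eGk z i <= nrmk z.
Proof. have := nrm_pos_parts z. have := rsum_nonneg_ge (fun i => eGk z i * eGk z i) i ltac:(move=> k; nra). rewrite /nrmk; lra. Qed.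
Lemma nrm_eH z i : eHk z i * eHk z i <= nrmk z.
Proof. have := nrm_pos_parts z. have := rsum_nonneg_ge (fun i => eHk z i * eHk z i) i ltac:(move=> k; nra). rewrite /nrmk; lra. Qed.

End Step.

Lemma sign_ev (a b : nat -> R) L : cv a L -> (forall k, a k <> 0 -> a k * b k > 0) -> L <> 0 ->
  exists N, forall k, (N <= k)%nat -> L * b k > 0.
Proof.
  move=> Ha Hab HL. case: (Rlt_or_le L 0) => Hl.
  - case: (cv_neg Ha Hl) => N HN; exists N => k Hk1. have := HN k Hk1. move=> Hak.
    have := Hab k ltac:(lra). move=> Hp. have : b k < 0 by nra. nra.
  - have Hl' : 0 < L by lra. case: (cv_pos Ha Hl') => N HN; exists N => k Hk1. have := HN k Hk1. move=> Hak.
    have := Hab k ltac:(lra). move=> Hp. have : b k > 0 by nra. nra.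
Qed.

Lemma sq_le1 x : x * x <= 1 -> Rabs x <= 1.
Proof. move=> H. unfold Rabs; destruct Rcase_abs; nra. Qed.

Lemma cv_grad {n} (F : vec n -> R) dF (zs : nat -> vec n) x kk :
  is_C1 F dF -> seq_converges zs x -> cv (fun k => dF (zs k) kk) (dF x kk).
Proof.
  move=> [_ HC] Hz e He. case: (HC x e He) => d [Hd Hd']. case: (Hz d Hd) => N HN.
  exists N => k Hk1. eapply Rle_lt_trans; [apply dist_coord|]. by apply Hd', HN.
Qed.

Section EB.
Context {n m l q : nat} (g : 'I_m -> vec n -> R) (h : 'I_l -> vec n -> R) (G H : 'I_q -> vec n -> R)
  (dg : 'I_m -> vec n -> vec n) (dh : 'I_l -> vec n -> vec n) (dG dH : 'I_q -> vec n -> vec n)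
  (Cg : forall i, is_C1 (g i) (dg i)) (Ch : forall j, is_C1 (h j) (dh j))
  (CG : forall i, is_C1 (G i) (dG i)) (CH : forall i, is_C1 (H i) (dH i)).

Local Notation Wn := (W g h G H).
Local Notation penn := (pen g h G H).
Local Notation feas := (feasible g h G H).

Lemma error_bound xs : feas xs -> MPVC_GQN g h G H dg dh dG dH xs ->
  exists c d, 0 < c /\ 0 < d /\ forall y, dist y xs < d -> exists z, feas z /\ dist y z <= c * penn y.
Proof.
  move=> Hfx Hgqn. apply NNPP => Hno.
  have HkA : forall k : nat, exists y, dist y xs < / (INR k + 1) /\ forall z, feas z -> (INR k + 1) * penn y < dist y z.
  { move=> k. have Hk0 : 0 < INR k + 1 by have := pos_INR k; lra.
    apply NNPP => Hk1. apply Hno. exists (INR k + 1), (/ (INR k + 1)). split => //; split; [by apply Rinv_0_lt_compat|].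
    move=> y Hy. apply NNPP => Hz. apply Hk1. exists y. split => // z Hfz. apply Rnot_le_lt => Hle. apply Hz. by exists z. }
  pose ys k := proj1_sig (constructive_indefinite_description _ (HkA k)).
  have Hys k : dist (ys k) xs < / (INR k + 1) /\ forall z, feas z -> (INR k + 1) * penn (ys k) < dist (ys k) z.
  { rewrite /ys; case: (constructive_indefinite_description _ _) => //. }
  have Hk2 : forall k, exists z, dist z (ys k) <= (INR k + 1) * penn (ys k) / 2 /\ 0 < Wn z /\
      vnorm (wt g h G H dg dh dG dH z) <= 2 * sqrt (Wn z) * (2 / (INR k + 1)).
  { move=> k. apply (step g h G H dg dh dG dH Cg Ch CG CH); [have := pos_INR k; lra|apply (proj2 (Hys k))]. }
  pose zs k := proj1_sig (constructive_indefinite_description _ (Hk2 k)).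
  have Hzs k : dist (zs k) (ys k) <= (INR k + 1) * penn (ys k) / 2 /\ 0 < Wn (zs k) /\
      vnorm (wt g h G H dg dh dG dH (zs k)) <= 2 * sqrt (Wn (zs k)) * (2 / (INR k + 1)).
  { rewrite /zs; case: (constructive_indefinite_description _ _) => //. }
  have Hzx k : dist (zs k) xs <= 2 / (INR k + 1).
  { have := proj1 (Hzs k). have := proj1 (Hys k). have := proj2 (Hys k) xs Hfx. have := dist_triang (zs k) (ys k) xs.
    have Hp : 0 < INR k + 1 by have := pos_INR k; lra.
    have : 2 / (INR k + 1) = 2 * / (INR k + 1) by rewrite /Rdiv.
    move: ((INR k + 1) * penn (ys k)) (/ (INR k + 1)) => A B. have := dist_nonneg (ys k) xs. lra. }
  have HW k := proj1 (proj2 (Hzs k)).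
  have Hn1 k := nrm_eq g h G H (zs k) (HW k).
  case: (@BW m (fun k i => lamk g h G H (zs k) i) 1) => [k i|phi1 [I1 [lam Hlam]]].
  { apply sq_le1. rewrite -(Hn1 k). apply nrm_lam. }
  case: (@BW l (fun k j => muk g h G H (zs (phi1 k)) j) 1) => [k i|phi2 [I2 [mu Hmu]]].
  { apply sq_le1. rewrite -(Hn1 (phi1 k)). apply nrm_mu. }
  case: (@BW q (fun k i => eGk g h G H (zs (phi1 (phi2 k))) i) 1) => [k i|phi3 [I3 [eG HeG]]].
  { apply sq_le1. rewrite -(Hn1 (phi1 (phi2 k))). apply nrm_eG. }
  case: (@BW q (fun k i => eHk g h G H (zs (phi1 (phi2 (phi3 k)))) i) 1) => [k i|phi4 [I4 [eH HeH]]].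
  { apply sq_le1. rewrite -(Hn1 (phi1 (phi2 (phi3 k)))). apply nrm_eH. }
  pose Phi k := phi1 (phi2 (phi3 (phi4 k))).
  have I34 : incr (fun k => phi3 (phi4 k)) := @incr_comp phi3 phi4 I3 I4.
  have I234 : incr (fun k => phi2 (phi3 (phi4 k))) := @incr_comp phi2 _ I2 I34.
  have IP : incr Phi := @incr_comp phi1 _ I1 I234.
  pose Zc k := zs (Phi k).
  have cL : forall i, cv (fun k => lamk g h G H (Zc k) i) (lam i).
  { move=> i. exact: (cv_sub (Hlam i) I234). }
  have cM : forall i, cv (fun k => muk g h G H (Zc k) i) (mu i).
  { move=> i. exact: (cv_sub (Hmu i) I34). }
  have cG : forall i, cv (fun k => eGk g h G H (Zc k) i) (eG i).
  { move=> i. exact: (cv_sub (HeG i) I4). }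
  have cH : forall i, cv (fun k => eHk g h G H (Zc k) i) (eH i) by move=> i; apply (HeH i).
  have HZ : seq_converges Zc xs.
  { move=> e He. case: (@eps_N (e / 2)); [lra|] => N HN. exists N => k Hk0.
    eapply Rle_lt_trans; [apply Hzx|].
    have := HN (Phi k) ltac:(have := incr_ge IP k; lia). rewrite /Rdiv. lra. }
  have cg i := cv_cont HZ (cont_g g dg Cg i xs).
  have cGG i := cv_cont HZ (cont_G G dG CG i xs).
  have cHH i := cv_cont HZ (cont_H H dH CH i xs).
  have cdiff1 i : cv (fun k => H i (Zc k) - G i (Zc k)) (H i xs - G i xs) by apply cv_plus; [apply cHH|apply cv_opp, cGG].
  have cdiff2 i : cv (fun k => G i (Zc k) - H i (Zc k)) (G i xs - H i xs) by apply cv_plus; [apply cGG|apply cv_opp, cHH].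
  have HWc k : 0 < Wn (Zc k) := HW (Phi k).
  have Hstat : forall kk, rsum (fun i => lam i * dg i xs kk) + rsum (fun j => mu j * dh j xs kk)
     + rsum (fun i => eG i * dG i xs kk) - rsum (fun i => eH i * dH i xs kk) = 0.
  { move=> kk.
    have c1 : cv (fun k => statk g h G H dg dh dG dH (Zc k) kk) (rsum (fun i => lam i * dg i xs kk) + rsum (fun j => mu j * dh j xs kk)
     + rsum (fun i => eG i * dG i xs kk) - rsum (fun i => eH i * dH i xs kk)).
    { rewrite /statk. apply cv_plus; [apply cv_plus; [apply cv_plus|]|apply cv_opp]; apply cv_rsum => i; apply cv_mult.
      - apply cL. - exact (cv_grad _ _ _ _ _ (Cg i) HZ). - apply cM. - exact (cv_grad _ _ _ _ _ (Ch i) HZ).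
      - apply cG. - exact (cv_grad _ _ _ _ _ (CG i) HZ). - apply cH. - exact (cv_grad _ _ _ _ _ (CH i) HZ). }
    have c2 : cv (fun k => statk g h G H dg dh dG dH (Zc k) kk) 0.
    { apply (@cv_squeeze0 _ (fun k => 2 * / (INR (Phi k) + 1))).
      - move=> k. rewrite stat_eq; last by apply HWc.
        have Hs : 0 < sqrt (Wn (Zc k)) by apply sqrt_lt_R0, HWc.
        have Hb := proj2 (proj2 (Hzs (Phi k))). rewrite -/(Zc k) in Hb.
        have Hc := coord_le (wt g h G H dg dh dG dH (Zc k)) kk.
        rewrite /Rdiv Rabs_mult (Rabs_pos_eq (/ _)); [|apply Rlt_le, Rinv_0_lt_compat; lra]. rewrite -/(Rdiv _ _).
        apply (Rmult_le_reg_r (2 * sqrt (Wn (Zc k)))); [lra|].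
        have E : Rabs (wt g h G H dg dh dG dH (Zc k) kk) / (2 * sqrt (Wn (Zc k))) * (2 * sqrt (Wn (Zc k)))
           = Rabs (wt g h G H dg dh dG dH (Zc k) kk) by field; lra.
        rewrite E. have E2 : 2 * sqrt (Wn (Zc k)) * (2 / (INR (Phi k) + 1)) = 2 * / (INR (Phi k) + 1) * (2 * sqrt (Wn (Zc k)))
          by rewrite /Rdiv; ring.
        lra.
      - have := cv_mult (cv_const 2) (cv_sub cv_inv IP). rewrite Rmult_0_r. done. }
    exact: (cv_unique c1 c2). }
  case: Hfx => [Fg [Fh FGH]].
  have ev0 : forall (a : nat -> R) L, cv a L -> (exists N, forall k, (N <= k)%nat -> a k = 0) -> L = 0.
  { move=> a L H1 H2. exact: (cv_eq0 H2 H1). }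
  have A2 : forall i, g i xs = 0 -> 0 <= lam i.
  { move=> i _. apply: (cv_le0 _ (cL i)). exists 0%nat => k _. apply lam_nonneg, HWc. }
  have A3 : forall i, g i xs <> 0 -> lam i = 0.
  { move=> i Hi. have Hl : g i xs < 0 by have := Fg i; lra.
    case: (cv_neg (cg i) Hl) => N HN. apply: (ev0 _ _ (cL i)). exists N => k Hk1. apply lam_zero, HN, Hk1. }
  have A4 : forall i, G i xs < 0 -> eG i = 0.
  { move=> i Hi. case: (cv_neg (cGG i) Hi) => N HN. apply: (ev0 _ _ (cG i)). exists N => k Hk1. apply eG_zero1, HN, Hk1. }
  have A6 : forall i, H i xs = 0 -> 0 < G i xs -> eG i = 0.
  { move=> i H1 H2. case: (cv_neg (cdiff1 i) ltac:(lra)) => N HN. apply: (ev0 _ _ (cG i)). exists N => k Hk1.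
    apply eG_zero2. have := HN k Hk1. lra. }
  have A7 : forall i, 0 <= eG i.
  { move=> i. apply: (cv_le0 _ (cG i)). exists 0%nat => k _. apply eG_nonneg, HWc. }
  have A9 : forall i, 0 < H i xs -> eH i = 0.
  { move=> i Hi. have HG : G i xs <= 0 by have := proj2 (FGH i); nra.
    case: (cv_neg (cdiff2 i) ltac:(lra)) => N1 HN1. case: (cv_pos (cHH i) Hi) => N2 HN2.
    apply: (ev0 _ _ (cH i)). exists (maxn N1 N2) => k Hk1. apply eH_zero.
    - have := HN1 k ltac:(lia). lra. - apply HN2; lia. }
  have A10 : forall i, H i xs = 0 -> G i xs < 0 -> 0 <= eH i.
  { move=> i H1 H2. case: (cv_neg (cdiff2 i) ltac:(lra)) => N HN.
    apply: (cv_le0 _ (cH i)). exists N => k Hk1. apply eH_nonneg; [apply HWc|]. have := HN k Hk1. lra. }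
  have A11 : forall i, eH i * eG i = 0.
  { move=> i. apply: (ev0 _ _ (cv_mult (cH i) (cG i))). exists 0%nat => k _. apply eHG. }
  have Hsum : rsum (fun i => lam i * lam i) + rsum (fun j => mu j * mu j) + rsum (fun i => eG i * eG i) + rsum (fun i => eH i * eH i) = 1.
  { have c1 : cv (fun k => nrmk g h G H (Zc k)) (rsum (fun i => lam i * lam i) + rsum (fun j => mu j * mu j) + rsum (fun i => eG i * eG i) + rsum (fun i => eH i * eH i)).
    { rewrite /nrmk. apply cv_plus; [apply cv_plus; [apply cv_plus|]|]; apply cv_rsum => i; apply cv_mult.
      all: first [apply cL|apply cM|apply cG|apply cH]. }
    have c2 : cv (fun k => nrmk g h G H (Zc k)) 1.
    { move=> e He; exists 0%nat => k _. rewrite /Zc Hn1 Rminus_diag Rabs_R0 //. }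
    exact: (cv_unique c1 c2). }
  have Hnz : nonzero_multiplier lam mu eG eH.
  { apply NNPP => Hn. move: Hsum. rewrite !rsum_zero; [lra| | | |] => i; apply NNPP => Hi; apply Hn.
    - right; right; right; exists i => E; apply Hi; rewrite E; ring.
    - right; right; left; exists i => E; apply Hi; rewrite E; ring.
    - right; left; exists i => E; apply Hi; rewrite E; ring.
    - left; exists i => E; apply Hi; rewrite E; ring. }
  case: (@fin_N m (fun i k => 0 < lam i -> 0 < lam i * g i (Zc k))) => [i|N1 HN1].
  { case: (Req_dec (lam i) 0) => Hl; [exists 0%nat => k _; lra|].
    case: (sign_ev _ (fun k => g i (Zc k)) _ (cL i) _ Hl) => [k Hk1|N HN]; [by apply lam_sign|].
    exists N => k Hk1 _. have := HN k Hk1. lra. }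
  case: (@fin_N l (fun j k => mu j <> 0 -> 0 < mu j * h j (Zc k))) => [i|N2 HN2].
  { case: (Req_dec (mu i) 0) => Hl; [exists 0%nat => k _; lra|].
    case: (sign_ev _ (fun k => h i (Zc k)) _ (cM i) _ Hl) => [k Hk1|N HN]; [by apply mu_sign|].
    exists N => k Hk1 _. have := HN k Hk1. lra. }
  case: (@fin_N q (fun i k => eH i <> 0 -> eH i * H i (Zc k) < 0)) => [i|N3 HN3].
  { case: (Req_dec (eH i) 0) => Hl; [exists 0%nat => k _; lra|].
    case: (sign_ev _ (fun k => - H i (Zc k)) _ (cH i) _ Hl) => [k Hk1|N HN]; [by apply eH_sign|].
    exists N => k Hk1 _. have := HN k Hk1. lra. }
  case: (@fin_N q (fun i k => 0 < eG i -> 0 < eG i * G i (Zc k))) => [i|N4 HN4].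
  { case: (Req_dec (eG i) 0) => Hl; [exists 0%nat => k _; lra|].
    case: (sign_ev _ (fun k => G i (Zc k)) _ (cG i) _ Hl) => [k Hk1|N HN]; [by apply eG_sign|].
    exists N => k Hk1 _. have := HN k Hk1. lra. }
  set NN := (N1 + N2 + N3 + N4)%nat.
  apply Hgqn. exists lam, mu, eG, eH, (fun j => Zc (j + NN)%nat).
  split; [|split; [exact Hnz|split]].
  - split; [exact Hstat|]. split; [exact A2|]. split; [exact A3|].
    split; [move=> i _; apply A4|]. split; [move=> i _; apply A4|]. split; [exact A6|].
    split; [move=> i _ _; apply A7|]. split; [move=> i _ _; apply A7|]. split; [exact A9|].
    split; [exact A10|]. move=> i _ _; apply A11.
  - move=> e He. case: (HZ e He) => N HN. exists N => k Hk1. apply HN. lia.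
  - move=> k. split; [|split; [|split]] => i.
    + apply HN1. lia. + apply HN2. lia. + apply HN3. lia. + apply HN4. lia.
Qed.
End EB.

Theorem theorem3p2 (n m l q : nat)
  (f : vec n -> R) (g : 'I_m -> vec n -> R) (h : 'I_l -> vec n -> R)
  (G H : 'I_q -> vec n -> R)
  (df : vec n -> vec n) (dg : 'I_m -> vec n -> vec n) (dh : 'I_l -> vec n -> vec n)
  (dG dH : 'I_q -> vec n -> vec n)
  (Cf : is_C1 f df) (Cg : forall i, is_C1 (g i) (dg i)) (Ch : forall j, is_C1 (h j) (dh j))
  (CG : forall i, is_C1 (G i) (dG i)) (CH : forall i, is_C1 (H i) (dH i))
  (xs : vec n)
  (Hmin : mpvc_local_min f g h G H xs)
  (Hlip : locally_lipschitz f xs)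
  (Hgqn : MPVC_GQN g h G H dg dh dG dH xs) :
  exact_penalty_at f g h G H xs.
Proof.
  case: Hmin => Hfx [e0 [He0 Hloc]].
  case: Hlip => L [dL [HL [HdL Hlip]]].
  case: (error_bound g h G H dg dh dG dH Cg Ch CG CH xs Hfx Hgqn) => c [d [Hc [Hd Heb]]].
  exists (c * L); split; [nra|] => alpha Ha.
  set r0 := Rmin d (Rmin dL e0) / 2.
  have Hr0 : 0 < r0 by rewrite /r0; apply Rdiv_lt_0_compat; [repeat apply Rmin_glb_lt|]; lra.
  have Er0 : r0 = Rmin d (Rmin dL e0) / 2 := erefl.
  clearbody r0.
  have Hm1 := Rmin_l d (Rmin dL e0). have Hm2 := Rmin_r d (Rmin dL e0).
  have Hm3 := Rmin_l dL e0. have Hm4 := Rmin_r dL e0.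
  have Hp0 := pen_feas_zero g h G H xs Hfx.
  case: (cont_pen g h G H dg dh dG dH Cg Ch CG CH xs (r0 / c)) => [|r1 [Hr1 Hr1']].
  { apply Rdiv_lt_0_compat; lra. }
  exists (Rmin r0 r1); split; [by apply Rmin_glb_lt|] => y _ Hy.
  have Hy0 : dist y xs < r0 by have := Rmin_l r0 r1; lra.
  have Hy1 : dist y xs < r1 by have := Rmin_r r0 r1; lra.
  have Hpy := Hr1' y Hy1. rewrite Hp0 Rminus_0_r in Hpy.
  have Hpn := pen_nonneg g h G H y.
  rewrite Rabs_pos_eq in Hpy => //.
  case: (Heb y ltac:(lra)) => z [Hfz Hyz].
  have Hcp : c * pen g h G H y < r0.
  { have : c * pen g h G H y < c * (r0 / c) by apply Rmult_lt_compat_l.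
    have E : c * (r0 / c) = r0 by field; lra. lra. }
  have Hzx : dist z xs < 2 * r0 by have := dist_triang z y xs; rewrite (dist_sym z y); lra.
  have Hfz' := Hloc z Hfz ltac:(lra).
  have Hl := Hlip y z ltac:(lra) ltac:(lra).
  change (f xs + alpha * pen g h G H xs <= f y + alpha * pen g h G H y).
  rewrite Hp0.
  have : f y >= f z - L * dist y z by move: Hl; unfold Rabs; destruct Rcase_abs; lra.
  have : L * dist y z <= L * (c * pen g h G H y) by apply Rmult_le_compat_l.
  have : c * L * pen g h G H y <= alpha * pen g h G H y by apply Rmult_le_compat_r.
  nra.
Qed.
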